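(* Let $f,g:S^2\to S^2$ be orientation-preserving homeomorphisms and let $\{x_1,x_2,x_3,x_4\}$ be a set of four distinct points contained in $\mathrm{Fix}(f)\cap\mathrm{Fix}(g)$. Then $$\mathcal R_{fg}(x_1,x_2,x_3,x_4)=\mathcal R_f(x_1,x_2,x_3,x_4)+\mathcal R_g(x_1,x_2,x_3,x_4),$$ where $fg=f\circ g$.
   Context: For distinct points $x_1,x_2,x_3,x_4\in S^2$ put $A=\{x_1,x_2\}$, $B=\{x_3,x_4\}$. For an oriented path $\alpha:[0,1]\to S^2\setminus B$ from $x_1$ to $x_2$ and an oriented path $\beta:[0,1]\to S^2\setminus A$ from $x_3$ to $x_4$, the algebraic intersection number $\alpha\cdot\beta\in\mathbb Z$ is defined by $[\delta*\beta]=(\alpha\cdot\beta)[u]$ in $H_1(S^2\setminus A)\cong\mathbb Z$, where $\delta$ is any path from $x_4$ to $x_3$ disjoint from the image of $\alpha$, $\delta*\beta$ is the closed loop obtained by concatenating $\delta$ and $\beta$, and $u$ is an embedded closed loop in $S^2\setminus A$ positively oriented with respect to $x_1$ (so $[u]$ generates $H_1(S^2\setminus A)$); this does not depend on $\delta$. For an orientation-preserving homeomorphism $f$ of $S^2$ with $x_1,\dots,x_4$ distinct fixed points, $\mathcal R_f(x_1,x_2,x_3,x_4)=\alpha\cdot(f\circ\beta)-\alpha\cdot\beta$, which is independent of the choice of such $\alpha,\beta$. *)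

(* Defs.v *)
From Stdlib Require Import Reals ZArith.
Open Scope R_scope.

Definition pt : Type := (R * R * R)%type.

Definition vadd (p q : pt) : pt :=
  let '(a1, a2, a3) := p in let '(b1, b2, b3) := q in (a1 + b1, a2 + b2, a3 + b3).
Definition vscale (c : R) (p : pt) : pt :=
  let '(a1, a2, a3) := p in (c * a1, c * a2, c * a3).
Definition vsub (p q : pt) : pt := vadd p (vscale (-1) q).
Definition dot (p q : pt) : R :=
  let '(a1, a2, a3) := p in let '(b1, b2, b3) := q in a1 * b1 + a2 * b2 + a3 * b3.
Definition cross (p q : pt) : pt :=
  let '(a1, a2, a3) := p in let '(b1, b2, b3) := q in
  (a2 * b3 - a3 * b2, a3 * b1 - a1 * b3, a1 * b2 - a2 * b1).
Definition vnorm (p : pt) : R := sqrt (dot p p).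
Definition dist3 (p q : pt) : R := vnorm (vsub p q).

Definition on_S2 (p : pt) : Prop := dot p p = 1.

Definition cont_on_S2 (f : pt -> pt) : Prop :=
  forall x, on_S2 x -> forall eps, eps > 0 -> exists del, del > 0 /\
    forall y, on_S2 y -> dist3 x y < del -> dist3 (f x) (f y) < eps.

Definition homeo_S2 (f : pt -> pt) : Prop :=
  (forall x, on_S2 x -> on_S2 (f x)) /\ cont_on_S2 f /\
  exists g : pt -> pt,
    (forall x, on_S2 x -> on_S2 (g x)) /\ cont_on_S2 g /\
    (forall x, on_S2 x -> g (f x) = x) /\ (forall x, on_S2 x -> f (g x) = x).

Definition unit_int (t : R) : Prop := 0 <= t <= 1.

Definition is_path (γ : R -> pt) : Prop :=
  (forall t, unit_int t -> on_S2 (γ t)) /\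
  forall t, unit_int t -> forall eps, eps > 0 -> exists del, del > 0 /\
    forall s, unit_int s -> Rabs (s - t) < del -> dist3 (γ t) (γ s) < eps.

Definition avoids (γ : R -> pt) (x : pt) : Prop := forall t, unit_int t -> γ t <> x.

Definition real_cont01 (θ : R -> R) : Prop :=
  forall t, unit_int t -> forall eps, eps > 0 -> exists del, del > 0 /\
    forall s, unit_int s -> Rabs (s - t) < del -> Rabs (θ t - θ s) < eps.

Definition concat (δ β : R -> pt) : R -> pt :=
  fun t => if Rle_dec t (1/2) then δ (2 * t) else β (2 * t - 1).

(* ---------- H_1(S^2 \ {a,b}) via winding numbers ----------
   stereographic projection from b onto the plane b^⊥, then translate so that
   (the image of) a is at the origin. *)
Definition stereo (b p : pt) : pt :=
  vscale (/ (1 - dot p b)) (vsub p (vscale (dot p b) b)).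
Definition Fab (a b p : pt) : pt := vsub (stereo b p) (stereo b a).

(* [γ] = k [u] in H_1(S^2 \ {a,b}), u a loop positively oriented w.r.t. a
   (S^2 oriented by the outward normal).  The plane b^⊥ is oriented by the
   normal -b, which makes the stereographic projection from b orientation
   preserving; k is the winding number of F_ab ∘ γ around 0, expressed by a
   continuous lift θ of the angle. *)
Definition wind (a b : pt) (γ : R -> pt) (k : Z) : Prop :=
  let u := vscale (/ vnorm (Fab a b (γ 0))) (Fab a b (γ 0)) in
  exists θ : R -> R, real_cont01 θ /\
    (forall t, unit_int t ->
       Fab a b (γ t) = vscale (vnorm (Fab a b (γ t)))
         (vadd (vscale (cos (θ t)) u) (vscale (sin (θ t)) (cross (vscale (-1) b) u)))) /\
    θ 1 - θ 0 = 2 * PI * IZR k.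

Definition loop_avoiding (a b : pt) (γ : R -> pt) : Prop :=
  is_path γ /\ γ 0 = γ 1 /\ avoids γ a /\ avoids γ b.

(* orientation preserving: f_* sends the positive generator of H_1(S^2\{a,b})
   (w.r.t. a) to the positive generator of H_1(S^2\{f a, f b}) (w.r.t. f a). *)
Definition orient_pres (f : pt -> pt) : Prop :=
  forall a b, on_S2 a -> on_S2 b -> a <> b ->
  forall γ, loop_avoiding a b γ ->
  forall k, wind a b γ k -> wind (f a) (f b) (fun t => f (γ t)) k.

(* α · β = k  (α from x1 to x2 in S^2\{x3,x4}, β from x3 to x4 in S^2\{x1,x2}) *)
Definition int_number (x1 x2 x3 x4 : pt) (α β : R -> pt) (k : Z) : Prop :=
  exists δ : R -> pt, is_path δ /\ δ 0 = x4 /\ δ 1 = x3 /\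
    (forall s t, unit_int s -> unit_int t -> δ s <> α t) /\
    wind x1 x2 (concat δ β) k.

Definition adm_alpha (x1 x2 x3 x4 : pt) (α : R -> pt) : Prop :=
  is_path α /\ α 0 = x1 /\ α 1 = x2 /\ avoids α x3 /\ avoids α x4.
Definition adm_beta (x1 x2 x3 x4 : pt) (β : R -> pt) : Prop :=
  is_path β /\ β 0 = x3 /\ β 1 = x4 /\ avoids β x1 /\ avoids β x2.

(* R_f(x1,x2,x3,x4) = r, i.e. r = α·(f∘β) − α·β for some admissible α, β
   (the value is independent of the choices). *)
Definition Rcal (f : pt -> pt) (x1 x2 x3 x4 : pt) (r : Z) : Prop :=
  exists α β : R -> pt, adm_alpha x1 x2 x3 x4 α /\ adm_beta x1 x2 x3 x4 β /\
  exists k1 k2 : Z,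
    int_number x1 x2 x3 x4 α (fun t => f (β t)) k1 /\
    int_number x1 x2 x3 x4 α β k2 /\ r = (k1 - k2)%Z.

(* Main.v *)
Require Import Defs.
From Stdlib Require Import Reals ZArith Lra Lia Psatz ClassicalEpsilon Classical FunctionalExtensionality.
Open Scope R_scope.

Lemma cpt_of_eps (f : R -> R) x :
  (forall eps, eps > 0 -> exists del, del > 0 /\ forall y, Rabs (y - x) < del -> Rabs (f y - f x) < eps) ->
  continuity_pt f x.
Proof.
  intros H eps He. destruct (H eps He) as [d [Hd H2]]. exists d; split; auto.
  intros y [_ Hy]. simpl in *. unfold Rdist in *. apply H2; auto.
Qed.

Lemma eps_of_cpt (f : R -> R) x : continuity_pt f x ->
  forall eps, eps > 0 -> exists del, del > 0 /\ forall y, Rabs (y - x) < del -> Rabs (f y - f x) < eps.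
Proof.
  intros H eps He. destruct (H eps He) as [d [Hd H2]]. exists d; split; auto.
  intros y Hy. destruct (Req_dec y x) as [->|Hne].
  - unfold Rminus; rewrite Rplus_opp_r, Rabs_R0; auto.
  - apply (H2 y). split; [split; [exact I| auto] | exact Hy].
Qed.

Lemma cp_plus f g x : continuity_pt f x -> continuity_pt g x -> continuity_pt (fun t => f t + g t) x.
Proof. intros; apply (continuity_pt_plus f g x); auto. Qed.
Lemma cp_minus f g x : continuity_pt f x -> continuity_pt g x -> continuity_pt (fun t => f t - g t) x.
Proof. intros; apply (continuity_pt_minus f g x); auto. Qed.
Lemma cp_mult f g x : continuity_pt f x -> continuity_pt g x -> continuity_pt (fun t => f t * g t) x.
Proof. intros; apply (continuity_pt_mult f g x); auto. Qed.
Lemma cp_div f g x : continuity_pt f x -> continuity_pt g x -> g x <> 0 -> continuity_pt (fun t => f t / g t) x.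
Proof. intros; apply (continuity_pt_div f g x); auto. Qed.
Lemma cp_inv g x : continuity_pt g x -> g x <> 0 -> continuity_pt (fun t => / g t) x.
Proof. intros; apply (continuity_pt_inv g x); auto. Qed.
Lemma cp_const c x : continuity_pt (fun _ => c) x.
Proof. apply continuity_pt_const. intros a b; reflexivity. Qed.
Lemma cp_id x : continuity_pt (fun t => t) x.
Proof. apply derivable_continuous_pt, derivable_pt_id. Qed.
Lemma cp_comp f g x : continuity_pt g x -> continuity_pt f (g x) -> continuity_pt (fun t => f (g t)) x.
Proof. intros; apply (continuity_pt_comp g f x); auto. Qed.
Lemma cp_atan x : continuity_pt atan x.
Proof. apply derivable_continuous_pt, derivable_pt_atan. Qed.
Lemma cp_cos x : continuity_pt cos x.
Proof. apply continuity_cos. Qed.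
Lemma cp_sin x : continuity_pt sin x.
Proof. apply continuity_sin. Qed.

Lemma cp_lip (g : R -> R) : (forall s t, Rabs (g s - g t) <= Rabs (s - t)) -> continuity g.
Proof.
  intros H x. apply cpt_of_eps. intros e He. exists e; split; auto.
  intros y Hy. eapply Rle_lt_trans; [apply H|exact Hy].
Qed.

Definition clamp (a b t : R) := Rmax a (Rmin b t).

Lemma clamp_lip a b s t : Rabs (clamp a b s - clamp a b t) <= Rabs (s - t).
Proof.
  unfold clamp, Rmax, Rmin.
  repeat (destruct Rle_dec); repeat (destruct Rle_dec); unfold Rabs; repeat destruct Rcase_abs; lra.
Qed.

Lemma clamp_in a b t : a <= b -> a <= clamp a b t <= b.
Proof. intros; unfold clamp, Rmax, Rmin; repeat destruct Rle_dec; lra. Qed.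

Lemma clamp_id a b t : a <= t <= b -> clamp a b t = t.
Proof. intros; unfold clamp, Rmax, Rmin; repeat destruct Rle_dec; lra. Qed.

Definition cont_on (a b : R) (h : R -> R) :=
  forall t, a <= t <= b -> forall eps, eps > 0 -> exists del, del > 0 /\
    forall s, a <= s <= b -> Rabs (s - t) < del -> Rabs (h t - h s) < eps.

Lemma cont_on_ext a b h : a <= b -> cont_on a b h -> continuity (fun t => h (clamp a b t)).
Proof.
  intros Hab H x. apply cpt_of_eps. intros e He.
  destruct (H (clamp a b x) (clamp_in a b x Hab) e He) as [d [Hd H2]].
  exists d; split; auto. intros y Hy.
  rewrite Rabs_minus_sym. apply H2. apply clamp_in; auto.
  eapply Rle_lt_trans; [apply clamp_lip| exact Hy].
Qed.

Lemma cont_on_of_cpt a b h : (forall t, a <= t <= b -> continuity_pt h t) -> cont_on a b h.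
Proof.
  intros H t Ht e He. destruct (eps_of_cpt h t (H t Ht) e He) as [d [Hd H2]].
  exists d; split; auto. intros s Hs Hst. rewrite Rabs_minus_sym. apply H2; auto.
Qed.

Lemma disc_const a b h : a <= b -> cont_on a b h ->
  (forall t, a <= t <= b -> exists k : Z, h t = IZR k * PI) -> h b = h a.
Proof.
  intros Hab Hc Hd.
  destruct (Req_dec a b) as [<-|Hne]; [reflexivity|].
  assert (Hlt : a < b) by lra.
  pose (he := fun t => h (clamp a b t)).
  assert (Hce : continuity he) by (apply cont_on_ext; auto).
  assert (Hea : he a = h a) by (unfold he; rewrite clamp_id; lra).
  assert (Heb : he b = h b) by (unfold he; rewrite clamp_id; lra).
  destruct (Hd a ltac:(lra)) as [ka Hka]. destruct (Hd b ltac:(lra)) as [kb Hkb].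
  destruct (Z.lt_total ka kb) as [Hk|[Hk|Hk]].
  - exfalso. pose (g := fun t => he t - (IZR ka * PI + PI / 2)).
    assert (Hg : continuity g) by (intro x; apply cp_minus; [apply Hce| apply cp_const]).
    assert (PI > 0) by apply PI_RGT_0.
    assert (IZR ka + 1 <= IZR kb) by (rewrite <- plus_IZR; apply IZR_le; lia).
    destruct (IVT g a b Hg Hlt) as [z [Hz Hgz]].
    + unfold g; rewrite Hea, Hka; lra.
    + unfold g; rewrite Heb, Hkb. nra.
    + unfold g, he in Hgz. rewrite clamp_id in Hgz by lra.
      destruct (Hd z Hz) as [k Hk2]. rewrite Hk2 in Hgz.
      assert (IZR (2 * (k - ka)) = 1).
      { rewrite mult_IZR, minus_IZR. apply Rmult_eq_reg_r with PI; [|lra]. nra. }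
      apply eq_IZR in H1. lia.
  - subst. congruence.
  - exfalso. pose (g := fun t => (IZR kb * PI + PI / 2) - he t).
    assert (Hg : continuity g) by (intro x; apply cp_minus; [apply cp_const|apply Hce]).
    assert (PI > 0) by apply PI_RGT_0.
    assert (IZR kb + 1 <= IZR ka) by (rewrite <- plus_IZR; apply IZR_le; lia).
    destruct (IVT g a b Hg Hlt) as [z [Hz Hgz]].
    + unfold g; rewrite Hea, Hka; nra.
    + unfold g; rewrite Heb, Hkb. lra.
    + unfold g, he in Hgz. rewrite clamp_id in Hgz by lra.
      destruct (Hd z Hz) as [k Hk2]. rewrite Hk2 in Hgz.
      assert (IZR (2 * (k - kb)) = 1).
      { rewrite mult_IZR, minus_IZR. apply Rmult_eq_reg_r with PI; [|lra]. nra. }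
      apply eq_IZR in H1. lia.
Qed.


Definition polar (x y th : R) :=
  x = sqrt (x * x + y * y) * cos th /\ y = sqrt (x * x + y * y) * sin th.

Definition Dang (a b c d : R) := atan ((b * c - a * d) / (a * c + b * d)).

Lemma sqrt_sq_eq x y : 0 <= y -> y * y = x -> sqrt x = y.
Proof. intros Hy <-. apply sqrt_square; auto. Qed.

Lemma Dang_polar a b c d al : c * c + d * d > 0 -> polar c d al -> a * c + b * d > 0 ->
  polar a b (al + Dang a b c d).
Proof.
  intros Hw [Hc Hd] Hre. unfold Dang.
  set (re := a * c + b * d) in *. set (im := b * c - a * d).
  set (r := sqrt (c * c + d * d)) in *.
  assert (Hab : a * a + b * b > 0).
  { destruct (Req_dec a 0); destruct (Req_dec b 0); subst re; try nra. }
  set (rho := sqrt (a * a + b * b)).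
  assert (Hr : r > 0) by (apply sqrt_lt_R0; lra).
  assert (Hrho : rho > 0) by (apply sqrt_lt_R0; lra).
  assert (Hrr : r * r = c * c + d * d) by (apply sqrt_sqrt; lra).
  assert (Hrhorho : rho * rho = a * a + b * b) by (apply sqrt_sqrt; lra).
  assert (Hid : re * re + im * im = (rho * rho) * (r * r)) by (rewrite Hrr, Hrhorho; subst re im; ring).
  assert (Hs : sqrt (1 + (im / re)²) = rho * r / re).
  { apply sqrt_sq_eq.
    - apply Rlt_le. apply Rdiv_lt_0_compat; [nra|lra].
    - replace (1 + (im / re)²) with ((re * re + im * im) / (re * re)) by (unfold Rsqr; field; lra).
      rewrite Hid. field. lra. }
  unfold polar. fold rho. rewrite cos_plus, sin_plus, cos_atan, sin_atan, Hs.
  assert (Hca : cos al = c / r).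
  { rewrite Hc. field. lra. }
  assert (Hsa : sin al = d / r).
  { rewrite Hd. field. lra. }
  rewrite Hca, Hsa. split.
  - replace (rho * (c / r * (1 / (rho * r / re)) - d / r * (im / re / (rho * r / re))))
      with ((c * re - d * im) / (r * r)) by (field; repeat split; lra).
    replace (c * re - d * im) with (a * (r * r)) by (rewrite Hrr; subst re im; ring).
    field. lra.
  - replace (rho * (d / r * (1 / (rho * r / re)) + c / r * (im / re / (rho * r / re))))
      with ((d * re + c * im) / (r * r)) by (field; repeat split; lra).
    replace (d * re + c * im) with (b * (r * r)) by (rewrite Hrr; subst re im; ring).
    field. lra.
Qed.

Lemma polar_exists x y : x * x + y * y > 0 -> exists th, polar x y th.
Proof.
  intros H.
  assert (Hs1 : sqrt 1 = 1) by apply sqrt_1.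
  destruct (Rtotal_order x 0) as [Hx|[Hx|Hx]].
  - exists (PI + Dang x y (-1) 0). apply Dang_polar; try lra.
    unfold polar. replace (-1 * -1 + 0 * 0) with 1 by ring. rewrite Hs1, cos_PI, sin_PI; split; ring.
  - subst x. destruct (Rtotal_order y 0) as [Hy|[Hy|Hy]].
    + exists (- (PI / 2) + Dang 0 y 0 (-1)). apply Dang_polar; try lra.
      unfold polar. replace (0 * 0 + -1 * -1) with 1 by ring. rewrite Hs1, cos_neg, sin_neg, cos_PI2, sin_PI2; split; ring.
    + subst; lra.
    + exists (PI / 2 + Dang 0 y 0 1). apply Dang_polar; try lra.
      unfold polar. replace (0 * 0 + 1 * 1) with 1 by ring. rewrite Hs1, cos_PI2, sin_PI2; split; ring.
  - exists (0 + Dang x y 1 0). apply Dang_polar; try lra.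
    unfold polar. replace (1 * 1 + 0 * 0) with 1 by ring. rewrite Hs1, cos_0, sin_0; split; ring.
Qed.

Lemma Rmin_lip t a b : Rabs (Rmin t a - Rmin t b) <= Rabs (a - b).
Proof. unfold Rmin; repeat destruct Rle_dec; unfold Rabs; repeat destruct Rcase_abs; lra. Qed.

Fixpoint Th (th0 : R) (term : nat -> R -> R) (k : nat) (t : R) : R :=
  match k with O => th0 | S i => Th th0 term i t + term i t end.

Theorem lift_exists (X Y : R -> R) : continuity X -> continuity Y ->
  (forall t, 0 <= t <= 1 -> X t * X t + Y t * Y t > 0) ->
  exists th, continuity th /\ forall t, 0 <= t <= 1 -> polar (X t) (Y t) (th t).
Proof.
  intros HX HY Hnz.
  destruct (continuity_ab_min (fun t => X t * X t + Y t * Y t) 0 1 ltac:(lra)) as [mx [Hmin Hmx]].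
  { intros c _. apply cp_plus; apply cp_mult; auto. }
  set (m := X mx * X mx + Y mx * Y mx) in *.
  assert (Hm : m > 0) by (apply Hnz; auto).
  set (e := Rmin 1 (m / 4)).
  assert (He : 0 < e) by (unfold e, Rmin; destruct Rle_dec; lra).
  assert (He2 : e * e <= m / 4).
  { unfold e, Rmin; destruct Rle_dec; nra. }
  destruct (Heine X (fun c => 0 <= c <= 1) (compact_P3 0 1) (fun x _ => HX x) (mkposreal e He)) as [dx Hdx].
  destruct (Heine Y (fun c => 0 <= c <= 1) (compact_P3 0 1) (fun x _ => HY x) (mkposreal e He)) as [dy Hdy].
  simpl in Hdx, Hdy.
  set (del := Rmin dx dy).
  assert (Hdel : 0 < del) by (unfold del, Rmin; destruct dx, dy; simpl; destruct Rle_dec; lra).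
  destruct (INR_archimed del 1 ltac:(lra)) as [n Hn].
  assert (Hn0 : INR n > 0).
  { destruct n. simpl in Hn. lra. apply lt_0_INR; lia. }
  set (pt := fun (i : nat) (t : R) => clamp 0 1 (Rmin t (INR i / INR n))).
  assert (Hpt_in : forall i t, 0 <= pt i t <= 1) by (intros; apply clamp_in; lra).
  assert (Hpt_close : forall i t, Rabs (pt (S i) t - pt i t) < del).
  { intros i t. unfold pt. eapply Rle_lt_trans; [apply clamp_lip|].
    eapply Rle_lt_trans; [apply Rmin_lip|]. rewrite S_INR.
    replace ((INR i + 1) / INR n - INR i / INR n) with (/ INR n) by (field; lra).
    rewrite Rabs_right by (apply Rle_ge, Rlt_le, Rinv_0_lt_compat; lra).
    apply (Rmult_lt_reg_r (INR n)); auto. rewrite Rinv_l by lra. lra. }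
  assert (Hre : forall i t, X (pt (S i) t) * X (pt i t) + Y (pt (S i) t) * Y (pt i t) > 0).
  { intros i t.
    assert (Hc := Hpt_close i t).
    assert (H1 : Rabs (X (pt (S i) t) - X (pt i t)) < e).
    { apply Hdx; auto. eapply Rlt_le_trans; [exact Hc|]. unfold del; apply Rmin_l. }
    assert (H2 : Rabs (Y (pt (S i) t) - Y (pt i t)) < e).
    { apply Hdy; auto. eapply Rlt_le_trans; [exact Hc|]. unfold del; apply Rmin_r. }
    assert (Hm0 := Hmin (pt i t) (Hpt_in i t)).
    set (a := X (pt (S i) t)) in *. set (b := Y (pt (S i) t)) in *.
    set (c := X (pt i t)) in *. set (d := Y (pt i t)) in *.
    apply Rabs_def2 in H1. apply Rabs_def2 in H2.
    assert (Ha2 : (a - c) * (a - c) < e * e) by nra.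
    assert (Hb2 : (b - d) * (b - d) < e * e) by nra.
    nra. }
  destruct (polar_exists (X 0) (Y 0) (Hnz 0 ltac:(lra))) as [th0 Hth0].
  set (term := fun i t => Dang (X (pt (S i) t)) (Y (pt (S i) t)) (X (pt i t)) (Y (pt i t))).
  assert (Hptc : forall i, continuity (pt i)).
  { intro i. apply cp_lip. intros s t. unfold pt.
    eapply Rle_trans; [apply clamp_lip|].
    unfold Rmin; repeat destruct Rle_dec; unfold Rabs; repeat destruct Rcase_abs; lra. }
  assert (Hcomp : forall F i t, continuity F -> continuity_pt (fun t => F (pt i t)) t).
  { intros F i t HF. apply cp_comp; [apply Hptc|apply HF]. }
  assert (Hterm : forall i t, continuity_pt (term i) t).
  { intros i t. unfold term, Dang. apply cp_comp; [|apply cp_atan].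
    apply cp_div; [apply cp_minus; apply cp_mult; auto| apply cp_plus; apply cp_mult; auto|].
    specialize (Hre i t). lra. }
  assert (HTh : forall k t, continuity_pt (Th th0 term k) t).
  { induction k; intro t; simpl; [apply cp_const|]. apply cp_plus; auto. }
  assert (HP : forall k t, polar (X (pt k t)) (Y (pt k t)) (Th th0 term k t)).
  { induction k; intro t; simpl.
    - assert (pt 0%nat t = 0).
      { unfold pt. simpl. replace (0 / INR n) with 0 by (field; lra).
        unfold clamp, Rmin, Rmax; repeat destruct Rle_dec; lra. }
      rewrite H; auto.
    - apply Dang_polar; auto. }
  exists (Th th0 term n). split.
  - intro t; apply HTh.
  - intros t Ht. specialize (HP n t).
    assert (pt n t = t).
    { unfold pt. replace (INR n / INR n) with 1 by (field; lra).
      rewrite Rmin_left by lra. apply clamp_id; auto. }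
    rewrite H in HP; exact HP.
Qed.

Lemma cont_on_minus a b f g : cont_on a b f -> cont_on a b g -> cont_on a b (fun t => f t - g t).
Proof.
  intros Hf Hg t Ht e He.
  destruct (Hf t Ht (e/2) ltac:(lra)) as [d1 [Hd1 H1]].
  destruct (Hg t Ht (e/2) ltac:(lra)) as [d2 [Hd2 H2]].
  exists (Rmin d1 d2); split; [unfold Rmin; destruct Rle_dec; lra|].
  intros s Hs Hst.
  assert (A1 := H1 s Hs ltac:(eapply Rlt_le_trans; [exact Hst| apply Rmin_l])).
  assert (A2 := H2 s Hs ltac:(eapply Rlt_le_trans; [exact Hst| apply Rmin_r])).
  apply Rabs_def2 in A1. apply Rabs_def2 in A2. apply Rabs_def1; lra.
Qed.

Lemma polar_cos_sin x y a b : x * x + y * y > 0 -> polar x y a -> polar x y b ->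
  cos a = cos b /\ sin a = sin b.
Proof.
  intros H [Ha1 Ha2] [Hb1 Hb2].
  assert (Hr : sqrt (x * x + y * y) > 0) by (apply sqrt_lt_R0; lra).
  set (r := sqrt (x * x + y * y)) in *.
  split; apply Rmult_eq_reg_l with r; lra.
Qed.

Lemma polar_diff_pi x y a b : x * x + y * y > 0 -> polar x y a -> polar x y b ->
  exists k : Z, a - b = IZR k * PI.
Proof.
  intros H Ha Hb. destruct (polar_cos_sin x y a b H Ha Hb) as [E1 E2].
  apply sin_eq_0_0. rewrite sin_minus, E1, E2. ring.
Qed.

Lemma polar_diff_2pi x y a b : x * x + y * y > 0 -> polar x y a -> polar x y b ->
  exists k : Z, a - b = 2 * PI * IZR k.
Proof.
  intros H Ha Hb. destruct (polar_cos_sin x y a b H Ha Hb) as [E1 E2].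
  assert (Hs : sin ((a - b) / 2) = 0).
  { assert (Hc : cos (a - b) = 1).
    { rewrite cos_minus, E1, E2. rewrite <- (sin2_cos2 b). unfold Rsqr; ring. }
    replace (a - b) with (2 * ((a - b) / 2)) in Hc by field.
    rewrite cos_2a_sin in Hc. assert (sin ((a - b) / 2) * sin ((a - b) / 2) = 0) by lra.
    destruct (Rmult_integral _ _ H0); auto. }
  destruct (sin_eq_0_0 _ Hs) as [k Hk]. exists k. lra.
Qed.

Lemma plift_unique (X Y th1 th2 : R -> R) :
  (forall t, 0 <= t <= 1 -> X t * X t + Y t * Y t > 0) ->
  cont_on 0 1 th1 -> cont_on 0 1 th2 ->
  (forall t, 0 <= t <= 1 -> polar (X t) (Y t) (th1 t)) ->
  (forall t, 0 <= t <= 1 -> polar (X t) (Y t) (th2 t)) ->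
  th1 1 - th1 0 = th2 1 - th2 0.
Proof.
  intros Hnz H1 H2 P1 P2.
  assert (E := disc_const 0 1 (fun t => th1 t - th2 t) ltac:(lra) (cont_on_minus 0 1 _ _ H1 H2)).
  simpl in E. assert (th1 1 - th2 1 = th1 0 - th2 0) by (apply E; intros t Ht; eapply polar_diff_pi; eauto).
  lra.
Qed.


Definition px (p : pt) := fst (fst p).
Definition py (p : pt) := snd (fst p).
Definition pz (p : pt) := snd p.

Lemma pt_eta p : p = (px p, py p, pz p).
Proof. destruct p as [[a b] c]; reflexivity. Qed.

Lemma pt_ext p q : px p = px q -> py p = py q -> pz p = pz q -> p = q.
Proof. destruct p as [[a b] c]; destruct q as [[d e] f]; unfold px, py, pz; simpl; intros; subst; auto. Qed.

Lemma dot_c p q : dot p q = px p * px q + py p * py q + pz p * pz q.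
Proof. destruct p as [[a b] c]; destruct q as [[d e] f]; reflexivity. Qed.

Ltac dpt := repeat match goal with
  | p : pt |- _ => let a := fresh "a" in let b := fresh "b" in let c := fresh "c" in destruct p as [[a b] c]
  | p : (R * R * R)%type |- _ => let a := fresh "a" in let b := fresh "b" in let c := fresh "c" in destruct p as [[a b] c] end; unfold px, py, pz, dot, vsub, vadd, vscale, cross in *; simpl in *.

Lemma comp_id1 p1 p2 p3 u1 u2 u3 b1 b2 b3 :
  u1*u1+u2*u2+u3*u3 = 1 -> b1*b1+b2*b2+b3*b3 = 1 -> u1*b1+u2*b2+u3*b3 = 0 -> p1*b1+p2*b2+p3*b3 = 0 ->
  let w1 := (-1*b2)*u3 - (-1*b3)*u2 in let w2 := (-1*b3)*u1 - (-1*b1)*u3 in let w3 := (-1*b1)*u2 - (-1*b2)*u1 in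
  p1 = (p1*u1+p2*u2+p3*u3)*u1 + (p1*w1+p2*w2+p3*w3)*w1.
Proof.
  intros H H0 H1 H2 w1 w2 w3.
  transitivity (p1*((u1*u1+u2*u2+u3*u3)*(b1*b1+b2*b2+b3*b3) - (u1*b1+u2*b2+u3*b3)*(u1*b1+u2*b2+u3*b3))).
  { rewrite H, H0, H1; ring. }
  transitivity ((p1*w1+p2*w2+p3*w3)*w1 + (p1*u1+p2*u2+p3*u3)*(u1*(b1*b1+b2*b2+b3*b3) - b1*(u1*b1+u2*b2+u3*b3))
     + (p1*b1+p2*b2+p3*b3)*(b1*(u1*u1+u2*u2+u3*u3) - u1*(u1*b1+u2*b2+u3*b3))).
  { subst w1 w2 w3; ring. }
  rewrite H, H0, H1, H2; ring.
Qed.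

Lemma comp_id2 p1 p2 p3 u1 u2 u3 b1 b2 b3 :
  u1*u1+u2*u2+u3*u3 = 1 -> b1*b1+b2*b2+b3*b3 = 1 -> u1*b1+u2*b2+u3*b3 = 0 -> p1*b1+p2*b2+p3*b3 = 0 ->
  let w1 := (-1*b2)*u3 - (-1*b3)*u2 in let w2 := (-1*b3)*u1 - (-1*b1)*u3 in let w3 := (-1*b1)*u2 - (-1*b2)*u1 in
  p2 = (p1*u1+p2*u2+p3*u3)*u2 + (p1*w1+p2*w2+p3*w3)*w2.
Proof.
  intros H H0 H1 H2 w1 w2 w3.
  transitivity (p2*((u1*u1+u2*u2+u3*u3)*(b1*b1+b2*b2+b3*b3) - (u1*b1+u2*b2+u3*b3)*(u1*b1+u2*b2+u3*b3))).
  { rewrite H, H0, H1; ring. }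
  transitivity ((p1*w1+p2*w2+p3*w3)*w2 + (p1*u1+p2*u2+p3*u3)*(u2*(b1*b1+b2*b2+b3*b3) - b2*(u1*b1+u2*b2+u3*b3))
     + (p1*b1+p2*b2+p3*b3)*(b2*(u1*u1+u2*u2+u3*u3) - u2*(u1*b1+u2*b2+u3*b3))).
  { subst w1 w2 w3; ring. }
  rewrite H, H0, H1, H2; ring.
Qed.

Lemma comp_id3 p1 p2 p3 u1 u2 u3 b1 b2 b3 :
  u1*u1+u2*u2+u3*u3 = 1 -> b1*b1+b2*b2+b3*b3 = 1 -> u1*b1+u2*b2+u3*b3 = 0 -> p1*b1+p2*b2+p3*b3 = 0 ->
  let w1 := (-1*b2)*u3 - (-1*b3)*u2 in let w2 := (-1*b3)*u1 - (-1*b1)*u3 in let w3 := (-1*b1)*u2 - (-1*b2)*u1 in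
  p3 = (p1*u1+p2*u2+p3*u3)*u3 + (p1*w1+p2*w2+p3*w3)*w3.
Proof.
  intros H H0 H1 H2 w1 w2 w3.
  transitivity (p3*((u1*u1+u2*u2+u3*u3)*(b1*b1+b2*b2+b3*b3) - (u1*b1+u2*b2+u3*b3)*(u1*b1+u2*b2+u3*b3))).
  { rewrite H, H0, H1; ring. }
  transitivity ((p1*w1+p2*w2+p3*w3)*w3 + (p1*u1+p2*u2+p3*u3)*(u3*(b1*b1+b2*b2+b3*b3) - b3*(u1*b1+u2*b2+u3*b3))
     + (p1*b1+p2*b2+p3*b3)*(b3*(u1*u1+u2*u2+u3*u3) - u3*(u1*b1+u2*b2+u3*b3))).
  { subst w1 w2 w3; ring. }
  rewrite H, H0, H1, H2; ring.
Qed.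

Lemma frame_decomp P u b : dot u u = 1 -> dot b b = 1 -> dot u b = 0 -> dot P b = 0 ->
  P = vadd (vscale (dot P u) u) (vscale (dot P (cross (vscale (-1) b) u)) (cross (vscale (-1) b) u)).
Proof.
  intros H H0 H1 H2. dpt. f_equal; [f_equal|].
  - apply comp_id1; auto.
  - apply comp_id2; auto.
  - apply comp_id3; auto.
Qed.

Lemma dot_sym p q : dot p q = dot q p.
Proof. dpt; ring. Qed.
Lemma dot_comb a c u w X : dot (vadd (vscale a u) (vscale c w)) X = a * dot u X + c * dot w X.
Proof. dpt; ring. Qed.
Lemma dot_vsub p q X : dot (vsub p q) X = dot p X - dot q X.
Proof. dpt; ring. Qed.
Lemma dot_vscale a p X : dot (vscale a p) X = a * dot p X.
Proof. dpt; ring. Qed.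

Lemma cross_facts u b : let w := cross (vscale (-1) b) u in
  dot w w = dot u u * dot b b - dot u b * dot u b /\ dot w u = 0 /\ dot w b = 0.
Proof. intros w; subst w; dpt; repeat split; ring. Qed.

Lemma dot_PP P u b : dot u u = 1 -> dot b b = 1 -> dot u b = 0 -> dot P b = 0 ->
  let w := cross (vscale (-1) b) u in
  dot P P = dot P u * dot P u + dot P w * dot P w.
Proof.
  intros H H0 H1 H2 w.
  destruct (cross_facts u b) as [Hw1 [Hw2 Hw3]]. fold w in Hw1, Hw2, Hw3.
  rewrite H, H0, H1 in Hw1.
  assert (HP := frame_decomp P u b H H0 H1 H2). fold w in HP.
  set (a := dot P u) in *. set (c := dot P w) in *. clearbody a c.
  rewrite HP. rewrite dot_comb. rewrite (dot_sym u), (dot_sym w), !dot_comb.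
  rewrite (dot_sym u w), Hw2, H. replace (dot w w) with 1 by lra. ring.
Qed.

Lemma frame_polar P u b th : dot u u = 1 -> dot b b = 1 -> dot u b = 0 -> dot P b = 0 ->
  let w := cross (vscale (-1) b) u in
  (P = vscale (vnorm P) (vadd (vscale (cos th) u) (vscale (sin th) w)) <-> polar (dot P u) (dot P w) th).
Proof.
  intros H H0 H1 H2 w.
  destruct (cross_facts u b) as [Hw1 [Hw2 Hw3]]. fold w in Hw1, Hw2, Hw3.
  rewrite H, H0, H1 in Hw1.
  assert (HPP := dot_PP P u b H H0 H1 H2). fold w in HPP.
  assert (HP := frame_decomp P u b H H0 H1 H2). fold w in HP.
  unfold vnorm. rewrite HPP. unfold polar.
  set (a := dot P u) in *. set (c := dot P w) in *.
  set (r := sqrt (a * a + c * c)).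
  split.
  - intro E. assert (Ea : a = dot (vscale r (vadd (vscale (cos th) u) (vscale (sin th) w))) u).
    { unfold a. rewrite E at 1. reflexivity. }
    assert (Ec : c = dot (vscale r (vadd (vscale (cos th) u) (vscale (sin th) w))) w).
    { unfold c. rewrite E at 1. reflexivity. }
    rewrite dot_vscale, dot_comb in Ea, Ec. rewrite Hw2, H in Ea.
    rewrite (dot_sym u w), Hw2 in Ec. replace (dot w w) with 1 in Ec by lra.
    split; [rewrite Ea at 1 | rewrite Ec at 1]; ring.
  - intros [Ea Ec]. rewrite HP at 1. clearbody r. clearbody a c. clear HP. rewrite Ea, Ec.
    clearbody w. dpt. f_equal; [f_equal|]; ring.
Qed.


Definition Wv (b u : pt) := cross (vscale (-1) b) u.
Definition PX b u c p := dot (vsub (stereo b p) c) u.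
Definition PY b u c p := dot (vsub (stereo b p) c) (Wv b u).
Definition lift3 b u c (g : R -> pt) th :=
  cont_on 0 1 th /\ forall t, 0 <= t <= 1 -> polar (PX b u c (g t)) (PY b u c (g t)) (th t).
Definition wn b u c g v := exists th, lift3 b u c g th /\ th 1 - th 0 = v.
Definition good b u c (g : R -> pt) :=
  forall t, 0 <= t <= 1 -> PX b u c (g t) * PX b u c (g t) + PY b u c (g t) * PY b u c (g t) > 0.
Definition rev (g : R -> pt) := fun t => g (1 - t).

Lemma cont_on_affine th k c : cont_on 0 1 th -> Rabs k <= 1 ->
  (forall t, 0 <= t <= 1 -> 0 <= k * t + c <= 1) -> cont_on 0 1 (fun t => th (k * t + c)).
Proof.
  intros H Hk Hm t Ht e He. destruct (H (k * t + c) (Hm t Ht) e He) as [d [Hd H2]].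
  exists d; split; auto. intros s Hs Hst. apply H2; auto.
  replace (k * s + c - (k * t + c)) with (k * (s - t)) by ring. rewrite Rabs_mult.
  assert (0 <= Rabs k) by apply Rabs_pos. assert (0 <= Rabs (s - t)) by apply Rabs_pos. nra.
Qed.

Lemma wn_concat b u c g1 g2 v : g1 1 = g2 0 -> wn b u c (concat g1 g2) v ->
  exists v1 v2, wn b u c g1 v1 /\ wn b u c g2 v2 /\ v = v1 + v2.
Proof.
  intros Hj [th [[Hc Hp] Hv]].
  exists (th (1/2) - th 0), (th 1 - th (1/2)). split; [|split; [|lra]].
  - exists (fun t => th ((1/2) * t + 0)). split; [split|].
    + apply cont_on_affine; auto. rewrite Rabs_right; lra. intros; lra.
    + intros t Ht. assert (Hq := Hp ((1/2) * t + 0) ltac:(lra)). unfold concat in Hq.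
      destruct Rle_dec; [|lra]. replace (2 * (1 / 2 * t + 0)) with t in Hq by field. exact Hq.
    + f_equal; f_equal; field.
  - exists (fun t => th ((1/2) * t + 1/2)). split; [split|].
    + apply cont_on_affine; auto. rewrite Rabs_right; lra. intros; lra.
    + intros t Ht. assert (Hq := Hp ((1/2) * t + 1/2) ltac:(lra)). unfold concat in Hq.
      destruct Rle_dec.
      * assert (t = 0) by lra. subst t. replace (2 * (1 / 2 * 0 + 1 / 2)) with 1 in Hq by field.
        rewrite Hj in Hq. exact Hq.
      * replace (2 * (1 / 2 * t + 1 / 2) - 1) with t in Hq by field. exact Hq.
    + replace (1 / 2 * 1 + 1 / 2) with 1 by field. replace (1 / 2 * 0 + 1 / 2) with (1/2) by field. auto.
Qed.

Lemma wn_rev b u c g v : wn b u c g v -> wn b u c (rev g) (- v).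
Proof.
  intros [th [[Hc Hp] Hv]]. exists (fun t => th ((-1) * t + 1)). split; [split|].
  - apply cont_on_affine; auto. rewrite Rabs_left; lra. intros; lra.
  - intros t Ht. unfold rev. replace (1 - t) with (-1 * t + 1) by ring. apply Hp; lra.
  - replace (-1 * 1 + 1) with 0 by ring. replace (-1 * 0 + 1) with 1 by ring. lra.
Qed.

Lemma wn_unique b u c g v1 v2 : good b u c g -> wn b u c g v1 -> wn b u c g v2 -> v1 = v2.
Proof.
  intros Hg [t1 [[C1 P1] E1]] [t2 [[C2 P2] E2]]. subst.
  apply (plift_unique (fun t => PX b u c (g t)) (fun t => PY b u c (g t))); auto.
Qed.

Lemma wn_loop b u c g v : good b u c g -> g 0 = g 1 -> wn b u c g v -> exists k : Z, v = 2 * PI * IZR k.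
Proof.
  intros Hg Hl [th [[C P] E]]. subst v.
  assert (P0 := P 0 ltac:(lra)). assert (P1 := P 1 ltac:(lra)). rewrite <- Hl in P1.
  apply (polar_diff_2pi _ _ _ _ (Hg 0 ltac:(lra)) P1 P0).
Qed.

Lemma stereo_dot b p X : dot (stereo b p) X = (dot p X - dot p b * dot b X) * / (1 - dot p b).
Proof. unfold stereo. dpt. ring. Qed.

Lemma stereo_perp b p : dot b b = 1 -> dot (stereo b p) b = 0.
Proof. intros H. rewrite stereo_dot, H. ring. Qed.

Lemma vsub_perp P Q b : dot P b = 0 -> dot Q b = 0 -> dot (vsub P Q) b = 0.
Proof. intros. rewrite dot_vsub. lra. Qed.

Lemma stereo_sq_raw b p q :
  dot (vsub (stereo b p) (stereo b q)) (vsub (stereo b p) (stereo b q)) =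
  / (1 - dot p b) * / (1 - dot p b) * (dot p p - 2 * dot p b * dot p b + dot p b * dot p b * dot b b)
  + / (1 - dot q b) * / (1 - dot q b) * (dot q q - 2 * dot q b * dot q b + dot q b * dot q b * dot b b)
  - 2 * / (1 - dot p b) * / (1 - dot q b) * (dot p q - 2 * dot p b * dot q b + dot p b * dot q b * dot b b).
Proof. unfold stereo. dpt. ring. Qed.

Lemma stereo_sq b p q : dot b b = 1 -> dot p p = 1 -> dot q q = 1 -> dot p b < 1 -> dot q b < 1 ->
  dot (vsub (stereo b p) (stereo b q)) (vsub (stereo b p) (stereo b q)) =
  dot (vsub p q) (vsub p q) / ((1 - dot p b) * (1 - dot q b)).
Proof.
  intros Hb Hp Hq H1 H2. rewrite stereo_sq_raw, Hb, Hp, Hq.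
  assert (dot (vsub p q) (vsub p q) = 2 - 2 * dot p q).
  { rewrite dot_vsub, !(dot_sym _ (vsub p q)), !dot_vsub, (dot_sym q p). lra. }
  rewrite H. field. split; lra.
Qed.

Lemma stereo_norm b p : dot b b = 1 -> dot p p = 1 -> dot p b < 1 ->
  dot (stereo b p) (stereo b p) = (1 + dot p b) / (1 - dot p b).
Proof.
  intros Hb Hp H. rewrite stereo_dot. rewrite (dot_sym p), (dot_sym b), !stereo_dot.
  rewrite Hb, Hp, (dot_sym b p). field. lra.
Qed.

Lemma sphere_dot_lt p b : on_S2 p -> on_S2 b -> p <> b -> dot p b < 1.
Proof.
  unfold on_S2. intros Hp Hb Hne.
  assert (E : dot (vsub p b) (vsub p b) = 2 - 2 * dot p b).
  { rewrite dot_vsub, !(dot_sym _ (vsub p b)), !dot_vsub, (dot_sym b p). lra. }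
  assert (dot (vsub p b) (vsub p b) > 0); [|lra].
  rewrite dot_c. destruct (Req_dec (px (vsub p b)) 0) as [E1|E1];
  [destruct (Req_dec (py (vsub p b)) 0) as [E2|E2];
   [destruct (Req_dec (pz (vsub p b)) 0) as [E3|E3]|]|]; try nra.
  exfalso. apply Hne. clear - E1 E2 E3. apply pt_ext; unfold vsub, vadd, vscale in *; dpt; lra.
Qed.

Lemma sphere_sub_pos p q : p <> q -> dot (vsub p q) (vsub p q) > 0.
Proof.
  intros Hne. rewrite dot_c. destruct (Req_dec (px (vsub p q)) 0) as [E1|E1];
  [destruct (Req_dec (py (vsub p q)) 0) as [E2|E2];
   [destruct (Req_dec (pz (vsub p q)) 0) as [E3|E3]|]|]; try nra.
  exfalso. apply Hne. clear - E1 E2 E3. apply pt_ext; unfold vsub, vadd, vscale in *; dpt; lra.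
Qed.

Lemma abs_le_sqrt3 a b c : Rabs a <= sqrt (a * a + b * b + c * c).
Proof.
  rewrite <- sqrt_Rsqr_abs. apply sqrt_le_1_alt. unfold Rsqr. nra.
Qed.

Lemma dist3_c p q : dist3 p q = sqrt ((px p - px q) * (px p - px q) + (py p - py q) * (py p - py q) + (pz p - pz q) * (pz p - pz q)).
Proof. unfold dist3, vnorm. f_equal. dpt. ring. Qed.

Lemma comp_le_dist p q : Rabs (px p - px q) <= dist3 p q /\ Rabs (py p - py q) <= dist3 p q /\ Rabs (pz p - pz q) <= dist3 p q.
Proof.
  rewrite dist3_c. repeat split.
  - apply abs_le_sqrt3.
  - eapply Rle_trans; [apply (abs_le_sqrt3 _ (px p - px q) (pz p - pz q))|]. apply sqrt_le_1_alt. lra.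
  - eapply Rle_trans; [apply (abs_le_sqrt3 _ (px p - px q) (py p - py q))|]. apply sqrt_le_1_alt. lra.
Qed.

Definition pext (g : R -> pt) := fun t => g (clamp 0 1 t).

Lemma path_cont g : is_path g ->
  continuity (fun t => px (pext g t)) /\ continuity (fun t => py (pext g t)) /\ continuity (fun t => pz (pext g t)).
Proof.
  intros [_ Hc]. unfold pext.
  split; [|split]; [apply (cont_on_ext 0 1 (fun t => px (g t)))|apply (cont_on_ext 0 1 (fun t => py (g t)))|apply (cont_on_ext 0 1 (fun t => pz (g t)))]; try lra; intros t Ht e He;
  destruct (Hc t Ht e He) as [d [Hd H]]; exists d; split; auto; intros s Hs Hst;
  specialize (H s Hs Hst); destruct (comp_le_dist (g t) (g s)) as [A [B C]]; lra.
Qed.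

Lemma cp_ext f g x : (forall t, f t = g t) -> continuity_pt f x -> continuity_pt g x.
Proof. intros H. replace g with f; auto. apply functional_extensionality; auto. Qed.

Lemma cp_dotp (g : R -> pt) X t :
  continuity (fun t => px (g t)) -> continuity (fun t => py (g t)) -> continuity (fun t => pz (g t)) ->
  continuity_pt (fun s => dot (g s) X) t.
Proof.
  intros H1 H2 H3. apply cp_ext with (fun s => px (g s) * px X + py (g s) * py X + pz (g s) * pz X).
  { intro s; rewrite dot_c; auto. }
  repeat apply cp_plus; apply cp_mult; auto; apply cp_const.
Qed.

Lemma PX_formula b u c p : PX b u c p = (dot p u - dot p b * dot b u) * / (1 - dot p b) - dot c u.
Proof. unfold PX. rewrite dot_vsub, stereo_dot. reflexivity. Qed.
Lemma PY_formula b u c p : PY b u c p = (dot p (Wv b u) - dot p b * dot b (Wv b u)) * / (1 - dot p b) - dot c (Wv b u).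
Proof. unfold PY. rewrite dot_vsub, stereo_dot. reflexivity. Qed.

Lemma cp_stereo_dot (g : R -> pt) b X t :
  continuity (fun t => px (g t)) -> continuity (fun t => py (g t)) -> continuity (fun t => pz (g t)) ->
  dot (g t) b < 1 ->
  continuity_pt (fun s => (dot (g s) X - dot (g s) b * dot b X) * / (1 - dot (g s) b)) t.
Proof.
  intros H1 H2 H3 Hb. apply cp_mult.
  - apply cp_minus; [apply cp_dotp; auto| apply cp_mult; [apply cp_dotp; auto|apply cp_const]].
  - apply cp_inv; [apply cp_minus; [apply cp_const|apply cp_dotp; auto]|lra].
Qed.

Lemma cont_PXY g b u c : is_path g -> (forall t, 0 <= t <= 1 -> dot (g t) b < 1) ->
  continuity (fun t => PX b u c (pext g t)) /\ continuity (fun t => PY b u c (pext g t)).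
Proof.
  intros Hg Hb. destruct (path_cont g Hg) as [H1 [H2 H3]].
  assert (Hb' : forall t, dot (pext g t) b < 1) by (intro t; apply Hb; apply clamp_in; lra).
  split; intro t.
  - apply cp_ext with (fun s => (dot (pext g s) u - dot (pext g s) b * dot b u) * / (1 - dot (pext g s) b) - dot c u).
    { intro s; rewrite PX_formula; auto. }
    apply cp_minus; [apply cp_stereo_dot; auto|apply cp_const].
  - apply cp_ext with (fun s => (dot (pext g s) (Wv b u) - dot (pext g s) b * dot b (Wv b u)) * / (1 - dot (pext g s) b) - dot c (Wv b u)).
    { intro s; rewrite PY_formula; auto. }
    apply cp_minus; [apply cp_stereo_dot; auto|apply cp_const].
Qed.

Lemma wn_exists b u c g : is_path g -> (forall t, 0 <= t <= 1 -> dot (g t) b < 1) -> good b u c g ->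
  exists v, wn b u c g v.
Proof.
  intros Hg Hb Hgood. destruct (cont_PXY g b u c Hg Hb) as [CX CY].
  destruct (lift_exists _ _ CX CY) as [th [Cth Pth]].
  { intros t Ht. unfold pext. rewrite clamp_id by lra. apply Hgood; auto. }
  exists (th 1 - th 0), th. split; auto. split.
  - apply cont_on_of_cpt. intros; apply Cth.
  - intros t Ht. specialize (Pth t Ht). unfold pext in Pth. rewrite clamp_id in Pth by lra. exact Pth.
Qed.

Lemma good_of b u c g : dot b b = 1 -> dot u u = 1 -> dot u b = 0 -> dot c b = 0 ->
  (forall t, 0 <= t <= 1 -> dot (vsub (stereo b (g t)) c) (vsub (stereo b (g t)) c) > 0) -> good b u c g.
Proof.
  intros Hb Hu Hub Hc H t Ht. specialize (H t Ht).
  rewrite (dot_PP (vsub (stereo b (g t)) c) u b) in H; auto.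
  apply vsub_perp; auto. apply stereo_perp; auto.
Qed.


Lemma cont_on_plus a b f g : cont_on a b f -> cont_on a b g -> cont_on a b (fun t => f t + g t).
Proof.
  intros Hf Hg. assert (H := cont_on_minus a b f (fun t => - g t) Hf).
  assert (cont_on a b (fun t => - g t)).
  { intros t Ht e He. destruct (Hg t Ht e He) as [d [Hd H2]]. exists d; split; auto.
    intros s Hs Hst. replace (- g t - - g s) with (- (g t - g s)) by ring. rewrite Rabs_Ropp; auto. }
  specialize (H H0). intros t Ht e He. destruct (H t Ht e He) as [d [Hd H2]]. exists d; split; auto.
  intros s Hs Hst. specialize (H2 s Hs Hst). replace (f t + g t - (f s + g s)) with (f t - - g t - (f s - - g s)) by ring. auto.
Qed.

Lemma cont_on_eq a b f g : (forall t, a <= t <= b -> f t = g t) -> cont_on a b f -> cont_on a b g.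
Proof.
  intros E H t Ht e He. destruct (H t Ht e He) as [d [Hd H2]]. exists d; split; auto.
  intros s Hs Hst. rewrite <- !E; auto.
Qed.

Lemma PX_shift b u c c' p : PX b u c p = PX b u c' p - (dot c u - dot c' u).
Proof. unfold PX. rewrite !dot_vsub. ring. Qed.
Lemma PY_shift b u c c' p : PY b u c p = PY b u c' p - (dot c (Wv b u) - dot c' (Wv b u)).
Proof. unfold PY. rewrite !dot_vsub. ring. Qed.

Lemma re_pos p1 p2 d1 d2 m : m > 0 -> p1 * p1 + p2 * p2 >= m -> Rabs d1 < Rmin 1 (m / 4) -> Rabs d2 < Rmin 1 (m / 4) ->
  (p1 - d1) * p1 + (p2 - d2) * p2 > 0.
Proof.
  intros Hm Hp H1 H2. set (e := Rmin 1 (m / 4)) in *.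
  assert (He2 : e * e <= m / 4) by (unfold e, Rmin; destruct Rle_dec; nra).
  apply Rabs_def2 in H1. apply Rabs_def2 in H2.
  assert (d1 * d1 < e * e) by nra. assert (d2 * d2 < e * e) by nra.
  assert (A1 : 0 <= (p1 / 2 - d1) * (p1 / 2 - d1)) by apply Rle_0_sqr.
  assert (A2 : 0 <= (p2 / 2 - d2) * (p2 / 2 - d2)) by apply Rle_0_sqr.
  replace ((p1 / 2 - d1) * (p1 / 2 - d1)) with (p1 * p1 / 4 - d1 * p1 + d1 * d1) in A1 by field.
  replace ((p2 / 2 - d2) * (p2 / 2 - d2)) with (p2 * p2 / 4 - d2 * p2 + d2 * d2) in A2 by field.
  replace ((p1 - d1) * p1 + (p2 - d2) * p2) with (p1 * p1 + p2 * p2 - d1 * p1 - d2 * p2) by ring.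
  lra.
Qed.

Lemma recenter b u c0 c L v : is_path L -> (forall t, 0 <= t <= 1 -> dot (L t) b < 1) -> L 0 = L 1 ->
  good b u c0 L ->
  (forall t, 0 <= t <= 1 -> PX b u c (L t) * PX b u c0 (L t) + PY b u c (L t) * PY b u c0 (L t) > 0) ->
  wn b u c0 L v -> wn b u c L v.
Proof.
  intros HL Hb Hl Hg Hre [th [[Cth Pth] Ev]].
  set (D := fun t => Dang (PX b u c (L t)) (PY b u c (L t)) (PX b u c0 (L t)) (PY b u c0 (L t))).
  exists (fun t => th t + D t). split; [split|].
  - apply cont_on_plus; auto.
    apply cont_on_eq with (fun t => Dang (PX b u c (pext L t)) (PY b u c (pext L t)) (PX b u c0 (pext L t)) (PY b u c0 (pext L t))).
    { intros t Ht. unfold pext, D. rewrite clamp_id; auto. }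
    apply cont_on_of_cpt. intros t Ht.
    destruct (cont_PXY L b u c HL Hb) as [C1 C2]. destruct (cont_PXY L b u c0 HL Hb) as [C3 C4].
    unfold Dang. apply cp_comp; [|apply cp_atan].
    apply cp_div; [apply cp_minus; apply cp_mult; auto| apply cp_plus; apply cp_mult; auto|].
    assert (H := Hre (clamp 0 1 t) (clamp_in 0 1 t ltac:(lra))). unfold pext. lra.
  - intros t Ht. unfold D. apply Dang_polar; auto.
  - unfold D. rewrite Hl. lra.
Qed.

Definition O3 : pt := (0, 0, 0).

Lemma far_center b u c L Mx : is_path L -> (forall t, 0 <= t <= 1 -> dot (L t) b < 1) -> L 0 = L 1 ->
  (forall t, 0 <= t <= 1 -> PX b u O3 (L t) * PX b u O3 (L t) + PY b u O3 (L t) * PY b u O3 (L t) <= Mx) ->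
  dot c u * dot c u + dot c (Wv b u) * dot c (Wv b u) > 2 * Mx + 1 ->
  wn b u c L 0.
Proof.
  intros HL Hb Hl HM HC.
  set (C1 := dot c u) in *. set (C2 := dot c (Wv b u)) in *.
  assert (HM0 : 0 <= Mx).
  { specialize (HM 0 ltac:(lra)). assert (A := Rle_0_sqr (PX b u O3 (L 0))). assert (B := Rle_0_sqr (PY b u O3 (L 0))).
    unfold Rsqr in *. lra. }
  assert (HO1 : forall p, PX b u c p = PX b u O3 p - C1).
  { intro p. rewrite (PX_shift b u c O3). unfold O3, C1. replace (dot (0, 0, 0) u) with 0 by (dpt; ring). ring. }
  assert (HO2 : forall p, PY b u c p = PY b u O3 p - C2).
  { intro p. rewrite (PY_shift b u c O3). unfold O3, C2. replace (dot (0, 0, 0) (Wv b u)) with 0 by (unfold Wv; dpt; ring). ring. }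
  assert (Hre : forall t, 0 <= t <= 1 -> PX b u c (L t) * (- C1) + PY b u c (L t) * (- C2) > 0).
  { intros t Ht. rewrite HO1, HO2. specialize (HM t Ht).
    set (a1 := PX b u O3 (L t)) in *. set (a2 := PY b u O3 (L t)) in *.
    assert (A1 : 0 <= (C1 / 2 - a1) * (C1 / 2 - a1)) by apply Rle_0_sqr.
    assert (A2 : 0 <= (C2 / 2 - a2) * (C2 / 2 - a2)) by apply Rle_0_sqr.
    replace ((C1 / 2 - a1) * (C1 / 2 - a1)) with (C1 * C1 / 4 - a1 * C1 + a1 * a1) in A1 by field.
    replace ((C2 / 2 - a2) * (C2 / 2 - a2)) with (C2 * C2 / 4 - a2 * C2 + a2 * a2) in A2 by field.
    replace ((a1 - C1) * - C1 + (a2 - C2) * - C2) with (C1 * C1 + C2 * C2 - a1 * C1 - a2 * C2) by ring.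
    lra. }
  destruct (polar_exists (- C1) (- C2)) as [thC HthC]; [nra|].
  exists (fun t => thC + Dang (PX b u c (L t)) (PY b u c (L t)) (- C1) (- C2)). split; [split|].
  - apply cont_on_eq with (fun t => thC + Dang (PX b u c (pext L t)) (PY b u c (pext L t)) (- C1) (- C2)).
    { intros t Ht. unfold pext. rewrite clamp_id; auto. }
    apply cont_on_of_cpt. intros t Ht.
    destruct (cont_PXY L b u c HL Hb) as [X1 X2].
    apply cp_plus; [apply cp_const|].
    unfold Dang. apply cp_comp; [|apply cp_atan].
    apply cp_div; [apply cp_minus; apply cp_mult; auto; apply cp_const| apply cp_plus; apply cp_mult; auto; apply cp_const|].
    assert (H := Hre (clamp 0 1 t) (clamp_in 0 1 t ltac:(lra))). unfold pext. lra.
  - intros t Ht. apply Dang_polar; auto. nra.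
  - rewrite Hl. ring.
Qed.

Lemma dist3_sq p q e : dist3 p q < e -> dot (vsub p q) (vsub p q) < e * e.
Proof.
  unfold dist3, vnorm. intros H.
  assert (H0 : 0 <= dot (vsub p q) (vsub p q)) by (rewrite dot_c; assert (A := Rle_0_sqr (px (vsub p q))); assert (B := Rle_0_sqr (py (vsub p q))); assert (C := Rle_0_sqr (pz (vsub p q))); unfold Rsqr in *; lra).
  assert (0 <= sqrt (dot (vsub p q) (vsub p q))) by apply sqrt_pos.
  rewrite <- (sqrt_sqrt _ H0). nra.
Qed.

Lemma sphere_sub_sq p q : on_S2 p -> on_S2 q -> dot (vsub p q) (vsub p q) = 2 - 2 * dot p q.
Proof.
  unfold on_S2; intros Hp Hq. rewrite dot_vsub, !(dot_sym _ (vsub p q)), !dot_vsub, (dot_sym q p). lra.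
Qed.

Lemma stereo_good b u p q L : on_S2 b -> dot u u = 1 -> dot u b = 0 -> on_S2 q -> q <> b ->
  is_path L -> (forall t, 0 <= t <= 1 -> L t <> b) -> (forall t, 0 <= t <= 1 -> L t <> q) ->
  p = stereo b q -> good b u p L.
Proof.
  intros Hb Hu Hub Hq Hqb HL HLb HLq ->. destruct HL as [HS _].
  apply good_of; auto. apply stereo_perp; auto.
  intros t Ht.
  assert (H1 : dot (L t) b < 1) by (apply sphere_dot_lt; auto).
  assert (H2 : dot q b < 1) by (apply sphere_dot_lt; auto).
  rewrite (stereo_sq b (L t) q Hb (HS t Ht) Hq H1 H2).
  apply Rdiv_lt_0_compat. apply sphere_sub_pos; auto. nra.
Qed.

Lemma winding_zero b u a al L v :
  on_S2 b -> dot u u = 1 -> dot u b = 0 ->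
  is_path al -> al 0 = a -> al 1 = b -> a <> b ->
  is_path L -> L 0 = L 1 ->
  (forall s t, 0 <= s <= 1 -> 0 <= t <= 1 -> L t <> al s) ->
  wn b u (stereo b a) L v -> v = 0.
Proof.
  intros Hb Hu Hub Hal Ha0 Ha1 Hab HL Hl Hav Hw.
  assert (HLb : forall t, 0 <= t <= 1 -> L t <> b) by (intros t Ht; rewrite <- Ha1; apply Hav; lra).
  assert (HLd : forall t, 0 <= t <= 1 -> dot (L t) b < 1) by (intros t Ht; apply sphere_dot_lt; auto; apply HL; auto).
  set (T := fun s => 0 <= s <= 1 /\ forall r, 0 <= r <= s -> al r <> b).
  destruct (completeness T) as [ss [Hub1 Hlub]].
  { exists 1. intros x [Hx _]. lra. }
  { exists 0. split; [lra|]. intros r Hr. replace r with 0 by lra. congruence. }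
  assert (Hss0 : 0 <= ss) by (apply Hub1; split; [lra|]; intros r Hr; replace r with 0 by lra; congruence).
  assert (Hss1 : ss <= 1) by (apply Hlub; intros x [Hx _]; lra).
  assert (Hbefore : forall r, 0 <= r < ss -> al r <> b).
  { intros r Hr E. assert (ss <= r); [|lra]. apply Hlub. intros x [Hx Hx2].
    destruct (Rle_lt_dec x r) as [|Hlt]; auto. exfalso. apply (Hx2 r); auto. lra. }
  assert (Hat : al ss = b).
  { apply NNPP. intro Hne.
    destruct (Req_dec ss 1) as [E|Hs1]; [subst ss; congruence|].
    assert (Hd0 : dist3 (al ss) b > 0).
    { unfold dist3, vnorm. apply sqrt_lt_R0. apply sphere_sub_pos; auto. }
    destruct HL as [_ _]. destruct Hal as [HalS Halc].
    destruct (Halc ss ltac:(unfold unit_int; lra) _ Hd0) as [d [Hd Hc]].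
    set (s' := Rmin 1 (ss + d / 2)).
    assert (Hs' : ss < s') by (unfold s', Rmin; destruct Rle_dec; lra).
    assert (s' <= ss); [|lra]. apply Hub1. split; [unfold s', Rmin; destruct Rle_dec; lra|].
    intros r Hr E. destruct (Rlt_le_dec r ss) as [Hlt|Hge].
    - apply (Hbefore r); auto. lra.
    - assert (Hcr := Hc r ltac:(unfold unit_int, s', Rmin in *; destruct Rle_dec; lra)
         ltac:(unfold s', Rmin in *; destruct Rle_dec; rewrite Rabs_right; lra)).
      rewrite E in Hcr. lra. }
  assert (Hss_pos : 0 < ss) by (destruct (Req_dec ss 0) as [E|]; [rewrite E, Ha0 in Hat; congruence| lra]).
  set (c := fun s => stereo b (al s)).
  assert (HalS : forall s, 0 <= s <= 1 -> on_S2 (al s)) by (intros; apply Hal; auto).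
  assert (Hgood : forall s, 0 <= s < ss -> good b u (c s) L).
  { intros s Hs. apply (stereo_good b u (c s) (al s) L Hb Hu Hub (HalS s ltac:(lra)) (Hbefore s Hs) HL HLb); auto.
    intros t Ht. apply Hav; auto; lra. }
  assert (Hex : forall s, 0 <= s < ss -> exists v, wn b u (c s) L v).
  { intros s Hs. apply wn_exists; auto. }
  assert (Hloc : forall s0, 0 <= s0 < ss -> exists del, del > 0 /\ forall s, 0 <= s < ss -> Rabs (s - s0) < del ->
     forall v, wn b u (c s0) L v -> wn b u (c s) L v).
  { intros s0 Hs0. assert (Hg0 := Hgood s0 Hs0).
    destruct (cont_PXY L b u (c s0) HL HLd) as [CX CY].
    destruct (continuity_ab_min (fun t => PX b u (c s0) (pext L t) * PX b u (c s0) (pext L t) + PY b u (c s0) (pext L t) * PY b u (c s0) (pext L t)) 0 1) as [mx [Hmin Hmx]]; [lra| intros; apply cp_plus; apply cp_mult; auto|].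
    simpl in Hmin.
    set (m := PX b u (c s0) (pext L mx) * PX b u (c s0) (pext L mx) + PY b u (c s0) (pext L mx) * PY b u (c s0) (pext L mx)) in *.
    assert (Hm : m > 0) by (unfold m, pext; rewrite clamp_id by lra; apply Hg0; auto).
    set (e := Rmin 1 (m / 4)).
    assert (He : e > 0) by (unfold e, Rmin; destruct Rle_dec; lra).
    destruct (path_cont al Hal) as [A1 [A2 A3]].
    assert (Hd0 : dot (pext al s0) b < 1).
    { unfold pext. rewrite clamp_id by lra. apply sphere_dot_lt; [apply HalS; lra|auto|apply Hbefore; auto]. }
    assert (HCu : continuity_pt (fun s => dot (stereo b (pext al s)) u) s0).
    { apply cp_ext with (fun s => (dot (pext al s) u - dot (pext al s) b * dot b u) * / (1 - dot (pext al s) b)).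
      intro; rewrite stereo_dot; auto. apply cp_stereo_dot; auto. }
    assert (HCw : continuity_pt (fun s => dot (stereo b (pext al s)) (Wv b u)) s0).
    { apply cp_ext with (fun s => (dot (pext al s) (Wv b u) - dot (pext al s) b * dot b (Wv b u)) * / (1 - dot (pext al s) b)).
      intro; rewrite stereo_dot; auto. apply cp_stereo_dot; auto. }
    destruct (eps_of_cpt _ _ HCu e He) as [d1 [Hd1 E1]].
    destruct (eps_of_cpt _ _ HCw e He) as [d2 [Hd2 E2]].
    exists (Rmin d1 d2). split; [unfold Rmin; destruct Rle_dec; lra|].
    intros s Hs Hss v0 Wv0.
    assert (B1 := E1 s ltac:(eapply Rlt_le_trans; [exact Hss|apply Rmin_l])).
    assert (B2 := E2 s ltac:(eapply Rlt_le_trans; [exact Hss|apply Rmin_r])).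
    unfold pext in B1, B2. rewrite !clamp_id in B1, B2 by lra.
    apply (recenter b u (c s0) (c s) L v0 HL HLd Hl Hg0); auto.
    intros t Ht. rewrite (PX_shift b u (c s) (c s0)), (PY_shift b u (c s) (c s0)).
    apply re_pos with m; auto.
    specialize (Hmin t Ht). unfold pext in Hmin. rewrite clamp_id in Hmin by lra. lra. }
  assert (Hfar : exists s1, 0 <= s1 < ss /\ wn b u (c s1) L 0).
  { destruct (cont_PXY L b u O3 HL HLd) as [AX AY].
    destruct (continuity_ab_maj (fun t => PX b u O3 (pext L t) * PX b u O3 (pext L t) + PY b u O3 (pext L t) * PY b u O3 (pext L t)) 0 1) as [mxp [Hmax Hmxp]]; [lra| intros; apply cp_plus; apply cp_mult; auto|].
    simpl in Hmax.
    set (Mx := PX b u O3 (pext L mxp) * PX b u O3 (pext L mxp) + PY b u O3 (pext L mxp) * PY b u O3 (pext L mxp)) in *.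
    assert (HM0 : 0 <= Mx).
    { unfold Mx. assert (A := Rle_0_sqr (PX b u O3 (pext L mxp))). assert (B := Rle_0_sqr (PY b u O3 (pext L mxp))).
      unfold Rsqr in *. lra. }
    set (eps := Rmin 1 (/ (2 * Mx + 2))).
    assert (Hinv : 0 < / (2 * Mx + 2)) by (apply Rinv_0_lt_compat; lra).
    assert (Heps : eps > 0) by (unfold eps, Rmin; destruct Rle_dec; lra).
    assert (Heps1 : eps <= 1) by apply Rmin_l.
    assert (Heps2 : eps * (2 * Mx + 2) <= 1).
    { assert (eps <= / (2 * Mx + 2)) by apply Rmin_r.
      apply Rmult_le_compat_r with (r := 2 * Mx + 2) in H; [|lra]. rewrite Rinv_l in H; lra. }
    destruct Hal as [HalS' Halc].
    destruct (Halc ss ltac:(unfold unit_int; lra) eps Heps) as [d [Hd Hc]].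
    set (s1 := ss - Rmin d ss / 2).
    assert (Hmn : 0 < Rmin d ss <= ss /\ Rmin d ss <= d) by (unfold Rmin; destruct Rle_dec; lra).
    assert (Hs1 : 0 <= s1 < ss) by (unfold s1; lra).
    exists s1. split; auto.
    assert (Hdist := Hc s1 ltac:(unfold unit_int; lra) ltac:(unfold s1; rewrite Rabs_left; lra)).
    rewrite Hat in Hdist. apply dist3_sq in Hdist.
    assert (Hals1 : on_S2 (al s1)) by (apply HalS; lra).
    rewrite sphere_sub_sq in Hdist; auto. rewrite (dot_sym b) in Hdist.
    assert (Hab1 : dot (al s1) b < 1) by (apply sphere_dot_lt; auto; apply Hbefore; lra).
    apply (far_center b u (c s1) L Mx HL HLd Hl).
    - intros t Ht. specialize (Hmax t Ht). unfold pext in Hmax. rewrite clamp_id in Hmax by lra. exact Hmax.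
    - assert (Hcb : dot (c s1) b = 0) by (apply stereo_perp; auto).
      unfold Wv. rewrite <- (dot_PP (c s1) u b Hu Hb Hub Hcb). unfold c. rewrite stereo_norm; auto.
      set (x := 1 - dot (al s1) b) in *.
      replace (1 + dot (al s1) b) with (2 - x) by (unfold x; ring).
      assert (Hx : 0 < x) by (unfold x; lra).
      assert (Hx2 : 2 * x < eps * eps) by (unfold x; lra).
      assert (Hx3 : x * (2 * Mx + 2) < 1 / 2) by nra.
      apply (Rmult_lt_reg_r x); auto. unfold Rdiv. rewrite Rmult_assoc, Rinv_l by lra. nra. }
  set (N := fun s => epsilon (inhabits 0) (fun v => wn b u (c s) L v)).
  assert (HN : forall s, 0 <= s < ss -> wn b u (c s) L (N s)).
  { intros s Hs. unfold N. apply epsilon_spec. apply Hex; auto. }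
  destruct Hfar as [s1 [Hs1 W1]].
  assert (Hcont : cont_on 0 s1 N).
  { intros t Ht e He. destruct (Hloc t ltac:(lra)) as [d [Hd Hd2]]. exists d; split; auto.
    intros s Hs Hst.
    assert (E : N s = N t).
    { apply (wn_unique b u (c s) L); [apply Hgood; lra| apply HN; lra|]. apply Hd2; [lra|auto|]. apply HN; lra. }
    rewrite E. unfold Rminus. rewrite Rplus_opp_r, Rabs_R0. lra. }
  assert (Hdisc := disc_const 0 s1 N ltac:(lra) Hcont).
  assert (E1 : N s1 = N 0).
  { apply Hdisc. intros t Ht. destruct (wn_loop b u (c t) L (N t)) as [k Hk]; auto.
    apply Hgood; lra. apply HN; lra. exists (2 * k)%Z. rewrite Hk, mult_IZR. ring. }
  assert (E2 : N s1 = 0) by (apply (wn_unique b u (c s1) L); auto; apply HN; lra).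
  assert (E3 : v = N 0).
  { apply (wn_unique b u (c 0) L); [apply Hgood; lra| |apply HN; lra]. unfold c. rewrite Ha0. auto. }
  lra.
Qed.


Lemma dist3_refl p : dist3 p p = 0.
Proof. unfold dist3, vnorm. replace (dot (vsub p p) (vsub p p)) with 0 by (dpt; ring). apply sqrt_0. Qed.

Lemma concat_path d g : is_path d -> is_path g -> d 1 = g 0 -> is_path (concat d g).
Proof.
  intros [Sd Cd] [Sg Cg] Hj. unfold unit_int in *. split.
  - intros t Ht. unfold concat. destruct Rle_dec; [apply Sd|apply Sg]; unfold unit_int in *; lra.
  - intros t Ht e He. unfold concat. unfold unit_int in Ht.
    destruct (Rtotal_order t (1/2)) as [Hlt|[Heq|Hgt]].
    + destruct (Cd (2 * t) ltac:(unfold unit_int; lra) e He) as [d1 [Hd1 H1]].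
      exists (Rmin (d1 / 2) (1/2 - t)). split; [unfold Rmin; destruct Rle_dec; lra|].
      intros s Hs Hst. unfold unit_int in Hs. assert (A : Rabs (s - t) < d1 / 2) by (eapply Rlt_le_trans; [exact Hst|apply Rmin_l]).
      assert (B : Rabs (s - t) < 1/2 - t) by (eapply Rlt_le_trans; [exact Hst|apply Rmin_r]).
      apply Rabs_def2 in A. apply Rabs_def2 in B.
      destruct (Rle_dec t (1/2)); [|lra]. destruct (Rle_dec s (1/2)); [|lra].
      apply H1; [unfold unit_int; lra|]. apply Rabs_def1; lra.
    + subst t. destruct (Cd 1 ltac:(unfold unit_int; lra) e He) as [d1 [Hd1 H1]].
      destruct (Cg 0 ltac:(unfold unit_int; lra) e He) as [d2 [Hd2 H2]].
      exists (Rmin (d1 / 2) (d2 / 2)). split; [unfold Rmin; destruct Rle_dec; lra|].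
      intros s Hs Hst. unfold unit_int in Hs. assert (A : Rabs (s - 1/2) < d1 / 2) by (eapply Rlt_le_trans; [exact Hst|apply Rmin_l]).
      assert (B : Rabs (s - 1/2) < d2 / 2) by (eapply Rlt_le_trans; [exact Hst|apply Rmin_r]).
      apply Rabs_def2 in A. apply Rabs_def2 in B.
      destruct (Rle_dec (1/2) (1/2)); [|lra]. replace (2 * (1/2)) with 1 by field.
      destruct (Rle_dec s (1/2)).
      * apply H1; [unfold unit_int; lra|]. apply Rabs_def1; lra.
      * rewrite Hj. apply H2; [unfold unit_int; lra|]. apply Rabs_def1; lra.
    + destruct (Cg (2 * t - 1) ltac:(unfold unit_int; lra) e He) as [d1 [Hd1 H1]].
      exists (Rmin (d1 / 2) (t - 1/2)). split; [unfold Rmin; destruct Rle_dec; lra|].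
      intros s Hs Hst. unfold unit_int in Hs. assert (A : Rabs (s - t) < d1 / 2) by (eapply Rlt_le_trans; [exact Hst|apply Rmin_l]).
      assert (B : Rabs (s - t) < t - 1/2) by (eapply Rlt_le_trans; [exact Hst|apply Rmin_r]).
      apply Rabs_def2 in A. apply Rabs_def2 in B.
      destruct (Rle_dec t (1/2)); [lra|]. destruct (Rle_dec s (1/2)); [lra|].
      apply H1; [unfold unit_int; lra|]. apply Rabs_def1; lra.
Qed.

Lemma rev_path g : is_path g -> is_path (rev g).
Proof.
  intros [Sg Cg]. unfold rev, unit_int in *. split.
  - intros t Ht. apply Sg. unfold unit_int in *; lra.
  - intros t Ht e He. destruct (Cg (1 - t) ltac:(unfold unit_int in *; lra) e He) as [d [Hd H]].
    exists d; split; auto. intros s Hs Hst. apply H; [unfold unit_int in *; lra|].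
    replace (1 - s - (1 - t)) with (- (s - t)) by ring. rewrite Rabs_Ropp; auto.
Qed.

Lemma comp_path F g : homeo_S2 F -> is_path g -> is_path (fun t => F (g t)).
Proof.
  intros [FS [FC _]] [Sg Cg]. split.
  - intros t Ht. apply FS, Sg, Ht.
  - intros t Ht e He. destruct (FC (g t) (Sg t Ht) e He) as [d1 [Hd1 H1]].
    destruct (Cg t Ht d1 Hd1) as [d2 [Hd2 H2]].
    exists d2; split; auto.
Qed.

Lemma homeo_inj F x y : homeo_S2 F -> on_S2 x -> on_S2 y -> F x = F y -> x = y.
Proof.
  intros [_ [_ [G [_ [_ [HGF _]]]]]] Hx Hy E. rewrite <- (HGF x Hx), <- (HGF y Hy), E. auto.
Qed.

Lemma comp_homeo F G : homeo_S2 F -> homeo_S2 G -> homeo_S2 (fun x => F (G x)).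
Proof.
  intros [FS [FC [F' [F'S [F'C [F1 F2]]]]]] [GS [GC [G' [G'S [G'C [G1 G2]]]]]].
  split; [intros; auto|]. split.
  - intros x Hx e He. destruct (FC (G x) (GS x Hx) e He) as [d1 [Hd1 H1]].
    destruct (GC x Hx d1 Hd1) as [d2 [Hd2 H2]]. exists d2; split; auto.
  - exists (fun x => G' (F' x)). split; [intros; auto|]. split.
    + intros x Hx e He. destruct (G'C (F' x) (F'S x Hx) e He) as [d1 [Hd1 H1]].
      destruct (F'C x Hx d1 Hd1) as [d2 [Hd2 H2]]. exists d2; split; auto.
    + split; intros x Hx.
      * rewrite F1; auto.
      * rewrite G2; auto.
Qed.

Lemma concat_comp F d g : (fun t => F (concat d g t)) = concat (fun t => F (d t)) (fun t => F (g t)).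
Proof. apply functional_extensionality. intro t. unfold concat. destruct Rle_dec; auto. Qed.

Lemma concat_0 d g : concat d g 0 = d 0.
Proof. unfold concat. destruct Rle_dec; [|lra]. f_equal; ring. Qed.
Lemma concat_1 d g : concat d g 1 = g 1.
Proof. unfold concat. destruct Rle_dec; [lra|]. f_equal; ring. Qed.

Definition cfg (x1 x2 x3 x4 : pt) := on_S2 x1 /\ on_S2 x2 /\ on_S2 x3 /\ on_S2 x4 /\
  x1 <> x2 /\ x1 <> x3 /\ x1 <> x4 /\ x2 <> x3 /\ x2 <> x4 /\ x3 <> x4.

Definition u4 x1 x2 x4 := vscale (/ vnorm (Fab x1 x2 x4)) (Fab x1 x2 x4).
Definition W x1 x2 x4 g v := wn x2 (u4 x1 x2 x4) (stereo x2 x1) g v.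

Definition avoid12 (x1 x2 : pt) (g : R -> pt) := forall t, 0 <= t <= 1 -> g t <> x1 /\ g t <> x2.

Lemma u4_props x1 x2 x3 x4 : cfg x1 x2 x3 x4 -> dot (u4 x1 x2 x4) (u4 x1 x2 x4) = 1 /\ dot (u4 x1 x2 x4) x2 = 0.
Proof.
  intros (H1 & H2 & H3 & H4 & D12 & D13 & D14 & D23 & D24 & D34).
  set (F := Fab x1 x2 x4).
  assert (HF : dot F F > 0).
  { unfold F, Fab.
    assert (A1 : dot x4 x2 < 1) by (apply sphere_dot_lt; auto).
    assert (A2 : dot x1 x2 < 1) by (apply sphere_dot_lt; auto).
    rewrite (stereo_sq x2 x4 x1 H2 H4 H1 A1 A2). apply Rdiv_lt_0_compat.
    apply sphere_sub_pos; auto. nra. }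
  assert (HFb : dot F x2 = 0) by (unfold F, Fab; apply vsub_perp; apply stereo_perp; auto).
  unfold u4. fold F. unfold vnorm. split.
  - rewrite dot_vscale. replace (dot F (vscale (/ sqrt (dot F F)) F)) with (/ sqrt (dot F F) * dot F F) by (dpt; ring).
    assert (Hs : sqrt (dot F F) * sqrt (dot F F) = dot F F) by (apply sqrt_sqrt; lra).
    assert (sqrt (dot F F) > 0) by (apply sqrt_lt_R0; lra).
    rewrite <- Hs at 3. field. lra.
  - rewrite dot_vscale, HFb. ring.
Qed.

Lemma goodW x1 x2 x3 x4 g : cfg x1 x2 x3 x4 -> is_path g -> avoid12 x1 x2 g ->
  good x2 (u4 x1 x2 x4) (stereo x2 x1) g /\ (forall t, 0 <= t <= 1 -> dot (g t) x2 < 1).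
Proof.
  intros Hc Hg Ha. destruct (u4_props _ _ _ _ Hc) as [U1 U2].
  destruct Hc as (H1 & H2 & H3 & H4 & D12 & D13 & D14 & D23 & D24 & D34).
  split.
  - apply (stereo_good x2 (u4 x1 x2 x4) (stereo x2 x1) x1 g); auto.
    intros t Ht; apply Ha; auto. intros t Ht; apply Ha; auto.
  - intros t Ht. apply sphere_dot_lt; [apply Hg; auto|auto|apply Ha; auto].
Qed.

Lemma W_exists x1 x2 x3 x4 g : cfg x1 x2 x3 x4 -> is_path g -> avoid12 x1 x2 g -> exists v, W x1 x2 x4 g v.
Proof.
  intros Hc Hg Ha. destruct (goodW _ _ _ _ g Hc Hg Ha) as [G1 G2]. apply wn_exists; auto.
Qed.

Lemma W_unique x1 x2 x3 x4 g v1 v2 : cfg x1 x2 x3 x4 -> is_path g -> avoid12 x1 x2 g ->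
  W x1 x2 x4 g v1 -> W x1 x2 x4 g v2 -> v1 = v2.
Proof.
  intros Hc Hg Ha. destruct (goodW _ _ _ _ g Hc Hg Ha) as [G1 G2]. apply wn_unique; auto.
Qed.

Lemma wind_iff x1 x2 x3 x4 g k : cfg x1 x2 x3 x4 -> g 0 = x4 ->
  (wind x1 x2 g k <-> W x1 x2 x4 g (2 * PI * IZR k)).
Proof.
  intros Hc Hg0. destruct (u4_props _ _ _ _ Hc) as [U1 U2].
  assert (Hb : dot x2 x2 = 1) by apply Hc.
  assert (HP : forall t, dot (Fab x1 x2 (g t)) x2 = 0).
  { intro t. unfold Fab. apply vsub_perp; apply stereo_perp; auto. }
  unfold wind, W, wn, lift3. cbv zeta. rewrite Hg0. fold (u4 x1 x2 x4).
  split.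
  - intros [th [Hc1 [Hr Hd]]]. exists th. split; [split|]; auto.
    intros t Ht. apply (frame_polar (Fab x1 x2 (g t)) (u4 x1 x2 x4) x2 (th t)); auto; apply Hr; exact Ht.
  - intros [th [[Hc1 Hr] Hd]]. exists th. split; [|split]; auto.
    intros t Ht. apply (frame_polar (Fab x1 x2 (g t)) (u4 x1 x2 x4) x2 (th t)); auto; apply Hr; exact Ht.
Qed.

Lemma avoid_rev x1 x2 g : avoid12 x1 x2 g -> avoid12 x1 x2 (rev g).
Proof. intros H t Ht. unfold rev. apply H. lra. Qed.

Lemma avoid_concat x1 x2 d g : avoid12 x1 x2 d -> avoid12 x1 x2 g -> avoid12 x1 x2 (concat d g).
Proof. intros H1 H2 t Ht. unfold concat. destruct Rle_dec; [apply H1|apply H2]; lra. Qed.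

Lemma delta_indep x1 x2 x3 x4 al d1 d2 a1 a2 : cfg x1 x2 x3 x4 ->
  adm_alpha x1 x2 x3 x4 al ->
  is_path d1 -> d1 0 = x4 -> d1 1 = x3 -> (forall s t, unit_int s -> unit_int t -> d1 s <> al t) ->
  is_path d2 -> d2 0 = x4 -> d2 1 = x3 -> (forall s t, unit_int s -> unit_int t -> d2 s <> al t) ->
  W x1 x2 x4 d1 a1 -> W x1 x2 x4 d2 a2 -> a1 = a2.
Proof.
  intros Hc [Hal [Ha0 [Ha1 _]]] P1 S1 E1 A1 P2 S2 E2 A2 W1 W2.
  assert (Av1 : avoid12 x1 x2 d1).
  { intros t Ht. rewrite <- Ha0, <- Ha1. split; apply A1; unfold unit_int; lra. }
  assert (Av2 : avoid12 x1 x2 d2).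
  { intros t Ht. rewrite <- Ha0, <- Ha1. split; apply A2; unfold unit_int; lra. }
  set (L := concat d1 (rev d2)).
  assert (HL : is_path L) by (apply concat_path; auto; [apply rev_path; auto| unfold rev; rewrite E1; replace (1 - 0) with 1 by ring; auto]).
  assert (AvL : avoid12 x1 x2 L) by (apply avoid_concat; auto; apply avoid_rev; auto).
  destruct (W_exists _ _ _ _ L Hc HL AvL) as [vL WL].
  destruct (u4_props _ _ _ _ Hc) as [U1 U2].
  assert (Z : vL = 0).
  { apply (winding_zero x2 (u4 x1 x2 x4) x1 al L vL); auto; try apply Hc.
    - unfold L. rewrite concat_0, concat_1. unfold rev. rewrite S1. replace (1 - 1) with 0 by ring. auto.
    - intros s t Hs Ht. unfold L, concat, rev. destruct Rle_dec.
      + apply A1; unfold unit_int; lra.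
      + apply A2; unfold unit_int; lra. }
  destruct (wn_concat x2 (u4 x1 x2 x4) (stereo x2 x1) d1 (rev d2) vL) as [b1 [b2 [B1 [B2 B3]]]]; auto.
  { unfold rev. rewrite E1. replace (1 - 0) with 1 by ring. auto. }
  assert (b1 = a1) by (apply (W_unique x1 x2 x3 x4 d1); auto).
  assert (b2 = - a2).
  { apply (W_unique x1 x2 x3 x4 (rev d2)); auto. apply rev_path; auto. apply avoid_rev; auto. apply wn_rev; auto. }
  lra.
Qed.

Lemma avoid_comp F x1 x2 g : homeo_S2 F -> on_S2 x1 -> on_S2 x2 -> F x1 = x1 -> F x2 = x2 -> is_path g ->
  avoid12 x1 x2 g -> avoid12 x1 x2 (fun t => F (g t)).
Proof.
  intros HF H1 H2 F1 F2 Hg Ha t Ht. destruct (Ha t Ht) as [A B]. split; intro E.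
  - apply A. apply (homeo_inj F); auto. apply Hg; auto. congruence.
  - apply B. apply (homeo_inj F); auto. apply Hg; auto. congruence.
Qed.

Lemma adm_beta_avoid x1 x2 x3 x4 b : adm_beta x1 x2 x3 x4 b -> avoid12 x1 x2 b.
Proof. intros [_ [_ [_ [A B]]]] t Ht. split; [apply A|apply B]; auto. Qed.

Lemma Rcal_decomp F x1 x2 x3 x4 r : cfg x1 x2 x3 x4 -> homeo_S2 F ->
  F x1 = x1 -> F x2 = x2 -> F x3 = x3 -> F x4 = x4 ->
  Rcal F x1 x2 x3 x4 r ->
  exists b, adm_beta x1 x2 x3 x4 b /\ exists vF vb, W x1 x2 x4 (fun t => F (b t)) vF /\ W x1 x2 x4 b vb /\
    2 * PI * IZR r = vF - vb.
Proof.
  intros Hc HF F1 F2 F3 F4 [al [b [Ha [Hb [k1 [k2 [I1 [I2 Hr]]]]]]]].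
  exists b. split; auto.
  assert (Bav := adm_beta_avoid _ _ _ _ _ Hb).
  destruct Hb as [Pb [Eb0 [Eb1 _]]].
  assert (PFb : is_path (fun t => F (b t))) by (apply comp_path; auto).
  assert (FBav : avoid12 x1 x2 (fun t => F (b t))) by (apply avoid_comp; auto; apply Hc).
  destruct I1 as [d1 [P1 [S1 [E1 [A1 WI1]]]]].
  destruct I2 as [d2 [P2 [S2 [E2 [A2 WI2]]]]].
  apply (wind_iff x1 x2 x3 x4) in WI1; auto; [|rewrite concat_0; auto].
  apply (wind_iff x1 x2 x3 x4) in WI2; auto; [|rewrite concat_0; auto].
  destruct (wn_concat x2 (u4 x1 x2 x4) (stereo x2 x1) d1 (fun t => F (b t)) _ ltac:(rewrite E1, Eb0; auto) WI1) as [a1 [c1 [Wa1 [Wc1 Hs1]]]].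
  destruct (wn_concat x2 (u4 x1 x2 x4) (stereo x2 x1) d2 b _ ltac:(rewrite E2, Eb0; auto) WI2) as [a2 [c2 [Wa2 [Wc2 Hs2]]]].
  assert (a1 = a2) by (apply (delta_indep x1 x2 x3 x4 al d1 d2); auto).
  exists c1, c2. split; auto. split; auto. rewrite Hr, minus_IZR. lra.
Qed.

Lemma beta_indep F x1 x2 x3 x4 b b' a c a' c' : cfg x1 x2 x3 x4 -> homeo_S2 F -> orient_pres F ->
  F x1 = x1 -> F x2 = x2 -> F x3 = x3 -> F x4 = x4 ->
  adm_beta x1 x2 x3 x4 b -> adm_beta x1 x2 x3 x4 b' ->
  W x1 x2 x4 (fun t => F (b t)) a -> W x1 x2 x4 b c ->
  W x1 x2 x4 (fun t => F (b' t)) a' -> W x1 x2 x4 b' c' -> a - c = a' - c'.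
Proof.
  intros Hc HF HO F1 F2 F3 F4 Hb Hb' Wa Wc Wa' Wc'.
  assert (Av := adm_beta_avoid _ _ _ _ _ Hb). assert (Av' := adm_beta_avoid _ _ _ _ _ Hb').
  destruct Hb as [Pb [Eb0 [Eb1 _]]]. destruct Hb' as [Pb' [Eb0' [Eb1' _]]].
  assert (H1 : on_S2 x1) by apply Hc. assert (H2 : on_S2 x2) by apply Hc. assert (D12 : x1 <> x2) by apply Hc.
  set (M := concat (rev b) b').
  assert (Hj : rev b 1 = b' 0) by (unfold rev; replace (1 - 1) with 0 by ring; congruence).
  assert (PM : is_path M) by (apply concat_path; auto; apply rev_path; auto).
  assert (AvM : avoid12 x1 x2 M) by (apply avoid_concat; auto; apply avoid_rev; auto).
  assert (M0 : M 0 = x4) by (unfold M; rewrite concat_0; unfold rev; replace (1 - 0) with 1 by ring; auto).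
  assert (M1 : M 1 = x4) by (unfold M; rewrite concat_1; auto).
  destruct (W_exists _ _ _ _ M Hc PM AvM) as [vM WM].
  destruct (goodW _ _ _ _ M Hc PM AvM) as [GM _].
  destruct (wn_loop _ _ _ _ _ GM ltac:(congruence) WM) as [k Hk]. rewrite Hk in WM.
  assert (WMw : wind x1 x2 M k) by (apply (wind_iff x1 x2 x3 x4); auto).
  assert (WFM := HO x1 x2 H1 H2 D12 M).
  specialize (WFM ltac:(split; [auto|split; [congruence|split; intros t Ht; apply AvM; auto]]) k WMw).
  rewrite F1, F2 in WFM.
  apply (wind_iff x1 x2 x3 x4) in WFM; auto; [|rewrite M0; auto].
  unfold M in WFM. rewrite concat_comp in WFM.
  destruct (wn_concat x2 (u4 x1 x2 x4) (stereo x2 x1) (fun t => F (rev b t)) (fun t => F (b' t)) _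
    ltac:(cbv beta; rewrite Hj; auto) WFM) as [p1 [p2 [Wp1 [Wp2 Hp]]]].
  destruct (wn_concat x2 (u4 x1 x2 x4) (stereo x2 x1) (rev b) b' _ Hj WM) as [q1 [q2 [Wq1 [Wq2 Hq]]]].
  assert (PFb : is_path (fun t => F (b t))) by (apply comp_path; auto).
  assert (PFb' : is_path (fun t => F (b' t))) by (apply comp_path; auto).
  assert (AFb : avoid12 x1 x2 (fun t => F (b t))) by (apply avoid_comp; auto).
  assert (AFb' : avoid12 x1 x2 (fun t => F (b' t))) by (apply avoid_comp; auto).
  assert (p1 = - a).
  { apply (W_unique x1 x2 x3 x4 (rev (fun t => F (b t)))); auto. apply rev_path; auto. apply avoid_rev; auto. apply wn_rev; auto. }
  assert (p2 = a') by (apply (W_unique x1 x2 x3 x4 (fun t => F (b' t))); auto).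
  assert (q1 = - c).
  { apply (W_unique x1 x2 x3 x4 (rev b)); auto. apply rev_path; auto. apply avoid_rev; auto. apply wn_rev; auto. }
  assert (q2 = c') by (apply (W_unique x1 x2 x3 x4 b'); auto).
  lra.
Qed.


Definition nrm (v : pt) := vscale (/ vnorm v) v.
Definition comb (l : R) (p : R) (q : pt) (r : pt) := vadd (vscale l q) (vscale p r).
Definition arc (p q : pt) (t : R) := nrm (comb (1 - t) t p q).

Lemma dot_pos v : v <> (0, 0, 0) -> dot v v > 0.
Proof.
  intros H. rewrite dot_c. destruct (Req_dec (px v) 0) as [E1|E1];
  [destruct (Req_dec (py v) 0) as [E2|E2];
   [destruct (Req_dec (pz v) 0) as [E3|E3]|]|]; try nra.
  exfalso. apply H. apply pt_ext; auto.
Qed.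

Lemma nrm_S2 v : v <> (0, 0, 0) -> on_S2 (nrm v).
Proof.
  intros H. assert (Hp := dot_pos v H). unfold on_S2, nrm, vnorm.
  rewrite dot_vscale. replace (dot v (vscale (/ sqrt (dot v v)) v)) with (/ sqrt (dot v v) * dot v v) by (dpt; ring).
  assert (Hs : sqrt (dot v v) * sqrt (dot v v) = dot v v) by (apply sqrt_sqrt; lra).
  assert (sqrt (dot v v) > 0) by (apply sqrt_lt_R0; lra).
  rewrite <- Hs at 3. field. lra.
Qed.

Lemma nrm_unit v : on_S2 v -> nrm v = v.
Proof.
  unfold on_S2, nrm, vnorm. intros H. rewrite H, sqrt_1. replace (/ 1) with 1 by field. dpt. f_equal; [f_equal|]; ring.
Qed.

Lemma nrm_eq A B : A <> (0, 0, 0) -> B <> (0, 0, 0) -> nrm A = nrm B ->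
  A = vscale (vnorm A / vnorm B) B.
Proof.
  intros HA HB E. assert (HA' := dot_pos A HA). assert (HB' := dot_pos B HB).
  assert (nA : vnorm A > 0) by (apply sqrt_lt_R0; lra).
  assert (nB : vnorm B > 0) by (apply sqrt_lt_R0; lra).
  unfold nrm in E. set (a := vnorm A) in *. set (b := vnorm B) in *. clearbody a b.
  assert (E2 : vscale a (vscale (/ a) A) = vscale a (vscale (/ b) B)) by (rewrite E; auto).
  replace (vscale a (vscale (/ a) A)) with A in E2 by (dpt; f_equal; [f_equal|]; field; lra).
  rewrite E2. dpt. f_equal; [f_equal|]; field; lra.
Qed.

Lemma path_of_comps (g : R -> pt) : (forall t, 0 <= t <= 1 -> on_S2 (g t)) ->
  (forall t, 0 <= t <= 1 -> continuity_pt (fun s => px (g s)) t /\ continuity_pt (fun s => py (g s)) t /\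
                          continuity_pt (fun s => pz (g s)) t) -> is_path g.
Proof.
  intros HS HC. split; [exact HS|].
  intros t Ht e He. destruct (HC t Ht) as [C1 [C2 C3]].
  destruct (eps_of_cpt _ _ C1 (e / 2) ltac:(lra)) as [d1 [Hd1 E1]].
  destruct (eps_of_cpt _ _ C2 (e / 2) ltac:(lra)) as [d2 [Hd2 E2]].
  destruct (eps_of_cpt _ _ C3 (e / 2) ltac:(lra)) as [d3 [Hd3 E3]].
  exists (Rmin d1 (Rmin d2 d3)). split; [unfold Rmin; repeat destruct Rle_dec; lra|].
  intros s Hs Hst.
  assert (A1 := E1 s ltac:(eapply Rlt_le_trans; [exact Hst|unfold Rmin; repeat destruct Rle_dec; lra])).
  assert (A2 := E2 s ltac:(eapply Rlt_le_trans; [exact Hst|unfold Rmin; repeat destruct Rle_dec; lra])).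
  assert (A3 := E3 s ltac:(eapply Rlt_le_trans; [exact Hst|unfold Rmin; repeat destruct Rle_dec; lra])).
  apply Rabs_def2 in A1. apply Rabs_def2 in A2. apply Rabs_def2 in A3.
  rewrite dist3_c. rewrite <- (sqrt_square e) by lra. apply sqrt_lt_1_alt. split.
  - assert (A := Rle_0_sqr (px (g t) - px (g s))). assert (B := Rle_0_sqr (py (g t) - py (g s))).
    assert (C := Rle_0_sqr (pz (g t) - pz (g s))). unfold Rsqr in *. lra.
  - nra.
Qed.

Lemma arc_path p q : (forall t, 0 <= t <= 1 -> comb (1 - t) t p q <> (0, 0, 0)) -> is_path (arc p q).
Proof.
  intros Hnz. apply path_of_comps.
  - intros t Ht. apply nrm_S2; auto.
  - intros t Ht. assert (Hpos := dot_pos _ (Hnz t Ht)).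
    assert (Cc : forall (sel : pt -> R), continuity_pt (fun s => sel (comb (1 - s) s p q)) t ->
      continuity_pt (fun s => / vnorm (comb (1 - s) s p q) * sel (comb (1 - s) s p q)) t).
    { intros sel Hsel. apply cp_mult; auto. apply cp_inv.
      - unfold vnorm. apply cp_comp; [|apply continuity_pt_sqrt; lra].
        apply cp_ext with (fun s => px (comb (1 - s) s p q) * px (comb (1 - s) s p q) + py (comb (1 - s) s p q) * py (comb (1 - s) s p q) + pz (comb (1 - s) s p q) * pz (comb (1 - s) s p q)).
        { intro s; rewrite dot_c; auto. }
        assert (L : forall sel : pt -> R, (forall a b, sel (comb a b p q) = a * sel p + b * sel q) -> continuity_pt (fun s => sel (comb (1 - s) s p q)) t).
        { intros sl Hsl. apply cp_ext with (fun s => (1 - s) * sl p + s * sl q). intro; rewrite Hsl; auto.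
          apply cp_plus; apply cp_mult; try apply cp_const; try apply cp_id. apply cp_minus; [apply cp_const|apply cp_id]. }
        repeat apply cp_plus; apply cp_mult; apply L; intros; unfold comb; dpt; ring.
      - assert (sqrt (dot (comb (1 - t) t p q) (comb (1 - t) t p q)) > 0) by (apply sqrt_lt_R0; lra).
        unfold vnorm; lra. }
    assert (L : forall sel : pt -> R, (forall a b, sel (comb a b p q) = a * sel p + b * sel q) -> continuity_pt (fun s => sel (comb (1 - s) s p q)) t).
    { intros sl Hsl. apply cp_ext with (fun s => (1 - s) * sl p + s * sl q). intro; rewrite Hsl; auto.
      apply cp_plus; apply cp_mult; try apply cp_const; try apply cp_id. apply cp_minus; [apply cp_const|apply cp_id]. }
    unfold arc, nrm. repeat split.
    + apply cp_ext with (fun s => / vnorm (comb (1 - s) s p q) * px (comb (1 - s) s p q)). intro; dpt; auto.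
      apply Cc, L. intros; unfold comb; dpt; ring.
    + apply cp_ext with (fun s => / vnorm (comb (1 - s) s p q) * py (comb (1 - s) s p q)). intro; dpt; auto.
      apply Cc, L. intros; unfold comb; dpt; ring.
    + apply cp_ext with (fun s => / vnorm (comb (1 - s) s p q) * pz (comb (1 - s) s p q)). intro; dpt; auto.
      apply Cc, L. intros; unfold comb; dpt; ring.
Qed.

Definition vk (k : R) : pt := (1, k, k * k).
Definition inspan (w p q : pt) := exists a b, w = vadd (vscale a p) (vscale b q).

Lemma quad_zero n1 n2 n3 k1 k2 k3 : k1 <> k2 -> k1 <> k3 -> k2 <> k3 ->
  n1 + n2 * k1 + n3 * (k1 * k1) = 0 -> n1 + n2 * k2 + n3 * (k2 * k2) = 0 -> n1 + n2 * k3 + n3 * (k3 * k3) = 0 ->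
  n1 = 0 /\ n2 = 0 /\ n3 = 0.
Proof.
  intros D12 D13 D23 E1 E2 E3.
  assert (A : n2 + n3 * (k1 + k2) = 0).
  { apply Rmult_eq_reg_l with (k1 - k2); [|lra]. nra. }
  assert (B : n2 + n3 * (k1 + k3) = 0).
  { apply Rmult_eq_reg_l with (k1 - k3); [|lra]. nra. }
  assert (C : n3 = 0).
  { apply Rmult_eq_reg_l with (k2 - k3); [|lra]. nra. }
  subst n3. split; [|split]; auto; nra.
Qed.

Lemma sumsq0 x y z : x * x + y * y + z * z = 0 -> x = 0 /\ y = 0 /\ z = 0.
Proof.
  intros H. assert (A := Rle_0_sqr x). assert (B := Rle_0_sqr y). assert (C := Rle_0_sqr z). unfold Rsqr in *.
  assert (x * x = 0) by lra. assert (y * y = 0) by lra. assert (z * z = 0) by lra.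
  split; [|split]; [destruct (Rmult_integral _ _ H0)|destruct (Rmult_integral _ _ H1)|destruct (Rmult_integral _ _ H2)]; auto.
Qed.

Lemma three_bad p q k1 k2 k3 : on_S2 p -> on_S2 q -> p <> q -> k1 <> k2 -> k1 <> k3 -> k2 <> k3 ->
  inspan (vk k1) p q -> inspan (vk k2) p q -> inspan (vk k3) p q -> False.
Proof.
  destruct p as [[p1 p2] p3]; destruct q as [[q1 q2] q3].
  intros Hp Hq Hpq D12 D13 D23 [a1 [b1 E1]] [a2 [b2 E2]] [a3 [b3 E3]].
  unfold on_S2, vk, dot, vadd, vscale in *. simpl in *.
  injection E1 as E11 E12 E13. injection E2 as E21 E22 E23. injection E3 as E31 E32 E33.
  set (n1 := p2 * q3 - p3 * q2). set (n2 := p3 * q1 - p1 * q3). set (n3 := p1 * q2 - p2 * q1).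
  assert (Z : n1 = 0 /\ n2 = 0 /\ n3 = 0).
  { apply (quad_zero n1 n2 n3 k1 k2 k3); auto.
    - transitivity (n1*(a1*p1+b1*q1) + n2*(a1*p2+b1*q2) + n3*(a1*p3+b1*q3)); [rewrite <- E11, <- E12, <- E13; ring | unfold n1,n2,n3; ring].
    - transitivity (n1*(a2*p1+b2*q1) + n2*(a2*p2+b2*q2) + n3*(a2*p3+b2*q3)); [rewrite <- E21, <- E22, <- E23; ring | unfold n1,n2,n3; ring].
    - transitivity (n1*(a3*p1+b3*q1) + n2*(a3*p2+b3*q2) + n3*(a3*p3+b3*q3)); [rewrite <- E31, <- E32, <- E33; ring | unfold n1,n2,n3; ring]. }
  destruct Z as [Z1 [Z2 Z3]]. unfold n1, n2, n3 in *.
  assert (Hd : (p1 * q1 + p2 * q2 + p3 * q3) * (p1 * q1 + p2 * q2 + p3 * q3) = 1).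
  { assert (L : (p1 * q1 + p2 * q2 + p3 * q3) * (p1 * q1 + p2 * q2 + p3 * q3) =
       (p1 * p1 + p2 * p2 + p3 * p3) * (q1 * q1 + q2 * q2 + q3 * q3) - ((p2 * q3 - p3 * q2) * (p2 * q3 - p3 * q2) + (p3 * q1 - p1 * q3) * (p3 * q1 - p1 * q3) + (p1 * q2 - p2 * q1) * (p1 * q2 - p2 * q1))) by ring.
    rewrite L, Hp, Hq, Z1, Z2, Z3. ring. }
  assert (Hd2 : p1 * q1 + p2 * q2 + p3 * q3 = 1 \/ p1 * q1 + p2 * q2 + p3 * q3 = -1).
  { set (x := p1 * q1 + p2 * q2 + p3 * q3) in *.
    assert ((x - 1) * (x + 1) = 0) by nra. destruct (Rmult_integral _ _ H); [left|right]; lra. }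
  destruct Hd2 as [Hd2|Hd2].
  - apply Hpq. assert (S : (p1 - q1) * (p1 - q1) + (p2 - q2) * (p2 - q2) + (p3 - q3) * (p3 - q3) = 0).
    { replace ((p1 - q1) * (p1 - q1) + (p2 - q2) * (p2 - q2) + (p3 - q3) * (p3 - q3)) with
        ((p1 * p1 + p2 * p2 + p3 * p3) + (q1 * q1 + q2 * q2 + q3 * q3) - 2 * (p1 * q1 + p2 * q2 + p3 * q3)) by ring. lra. }
    apply sumsq0 in S. destruct S as [S1 [S2 S3]]. f_equal; [f_equal|]; lra.
  - assert (S : (p1 + q1) * (p1 + q1) + (p2 + q2) * (p2 + q2) + (p3 + q3) * (p3 + q3) = 0).
    { replace ((p1 + q1) * (p1 + q1) + (p2 + q2) * (p2 + q2) + (p3 + q3) * (p3 + q3)) with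
        ((p1 * p1 + p2 * p2 + p3 * p3) + (q1 * q1 + q2 * q2 + q3 * q3) + 2 * (p1 * q1 + p2 * q2 + p3 * q3)) by ring. lra. }
    apply sumsq0 in S. destruct S as [S1 [S2 S3]].
    assert (q1 = - p1) by lra. assert (q2 = - p2) by lra. subst q1 q2.
    assert (X1 : 1 = (a1 - b1) * p1) by lra. assert (X2 : k1 = (a1 - b1) * p2) by lra.
    assert (X3 : 1 = (a2 - b2) * p1) by lra. assert (X4 : k2 = (a2 - b2) * p2) by lra.
    assert (Y1 : k1 * p1 = p2) by (rewrite X2; replace ((a1 - b1) * p2 * p1) with (((a1 - b1) * p1) * p2) by ring; rewrite <- X1; ring).
    assert (Y2 : k2 * p1 = p2) by (rewrite X4; replace ((a2 - b2) * p2 * p1) with (((a2 - b2) * p1) * p2) by ring; rewrite <- X3; ring).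
    assert (Y : (k1 - k2) * p1 = 0) by lra. destruct (Rmult_integral _ _ Y) as [Y3|Y3]; [lra|]. rewrite Y3 in X1. lra.
Qed.

Lemma pick2 (P : R -> Prop) : (forall k1 k2 k3, P k1 -> P k2 -> P k3 -> k1 = k2 \/ k1 = k3 \/ k2 = k3) ->
  exists r1 r2, forall k, P k -> k = r1 \/ k = r2.
Proof.
  intros H. destruct (classic (exists k, P k)) as [[r1 H1]|N].
  - destruct (classic (exists k, P k /\ k <> r1)) as [[r2 [H2 N2]]|N'].
    + exists r1, r2. intros k Hk. destruct (H r1 r2 k H1 H2 Hk) as [E|[E|E]]; [congruence|left; auto|right; auto].
    + exists r1, r1. intros k Hk. left. apply NNPP. intro. apply N'. eauto.
  - exists 0, 0. intros k Hk. exfalso. eauto.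
Qed.

Lemma bad_fin p q : on_S2 p -> on_S2 q -> p <> q -> exists r1 r2, forall k, inspan (vk k) p q -> k = r1 \/ k = r2.
Proof.
  intros Hp Hq Hpq. apply pick2. intros k1 k2 k3 H1 H2 H3.
  destruct (Req_dec k1 k2); auto. destruct (Req_dec k1 k3); auto. destruct (Req_dec k2 k3); auto.
  exfalso. apply (three_bad p q k1 k2 k3); auto.
Qed.

Lemma comb_swap a b p q : comb a b p q = comb b a q p.
Proof. unfold comb. dpt. f_equal; [f_equal|]; ring. Qed.

Lemma lin_nz w p q a b : ~ inspan w q p -> on_S2 q -> (a <> 0 \/ b <> 0) -> comb a b q w <> (0, 0, 0).
Proof.
  intros Hn Hq Hab E. destruct (Req_dec b 0) as [Hb|Hb].
  - subst b. destruct Hab as [Ha|Ha]; [|lra].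
    destruct q as [[q1 q2] q3]; destruct w as [[w1 w2] w3].
    unfold on_S2, comb, dot, vadd, vscale in *. simpl in *. injection E as E1 E2 E3.
    assert (q1 = 0) by (apply Rmult_eq_reg_l with a; lra).
    assert (q2 = 0) by (apply Rmult_eq_reg_l with a; lra).
    assert (q3 = 0) by (apply Rmult_eq_reg_l with a; lra). subst. lra.
  - apply Hn. exists (- a / b), 0. unfold comb in E.
    destruct q as [[q1 q2] q3]; destruct w as [[w1 w2] w3]; destruct p as [[p1 p2] p3].
    unfold vadd, vscale in *. simpl in *. injection E as E1 E2 E3.
    f_equal; [f_equal|]; apply Rmult_eq_reg_l with b; auto; field_simplify; auto; lra.
Qed.

Lemma neg_inspan w p q : inspan (vscale (-1) w) p q -> inspan w p q.
Proof.
  intros [a [b E]]. exists (- a), (- b).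
  assert (E2 : vscale (-1) (vscale (-1) w) = vscale (-1) (vadd (vscale a p) (vscale b q))) by (rewrite E; auto).
  replace (vscale (-1) (vscale (-1) w)) with w in E2 by (dpt; f_equal; [f_equal|]; ring).
  rewrite E2. dpt. f_equal; [f_equal|]; ring.
Qed.

Lemma inspan_swap w p q : inspan w p q -> inspan w q p.
Proof. intros [a [b E]]. exists b, a. rewrite E. dpt. f_equal; [f_equal|]; ring. Qed.

Lemma cone_disj xi xj w l m l' m' c : on_S2 xi -> on_S2 xj -> xi <> xj -> ~ inspan w xi xj ->
  0 <= l -> 0 <= m -> l + m = 1 -> 0 <= l' -> 0 <= m' -> l' + m' = 1 -> c > 0 ->
  comb l m xi w <> vscale c (comb l' m' xj (vscale (-1) w)).
Proof.
  intros Hi Hj Hij Hn Hl Hm Hlm Hl' Hm' Hlm' Hc E.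
  destruct xi as [[i1 i2] i3]; destruct xj as [[j1 j2] j3]; destruct w as [[w1 w2] w3].
  destruct (Req_dec (m + c * m') 0) as [Z|Z].
  - assert (m = 0) by nra. assert (m' = 0) by nra. subst m m'. replace l with 1 in E by lra. replace l' with 1 in E by lra.
    unfold on_S2, comb, dot, vadd, vscale in *. simpl in *. injection E as E1 E2 E3.
    assert (i1 = c * j1) by lra. assert (i2 = c * j2) by lra. assert (i3 = c * j3) by lra. subst i1 i2 i3.
    assert (c * c = 1).
    { replace (c * j1 * (c * j1) + c * j2 * (c * j2) + c * j3 * (c * j3)) with (c * c * (j1 * j1 + j2 * j2 + j3 * j3)) in Hi by ring.
      rewrite Hj in Hi. lra. }
    assert (c = 1) by nra. subst c. apply Hij. f_equal; [f_equal|]; ring.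
  - apply Hn. exists (- l / (m + c * m')), (c * l' / (m + c * m')). unfold comb, vadd, vscale in *. simpl in *.
    injection E as E1 E2 E3.
    f_equal; [f_equal|]; apply Rmult_eq_reg_l with (m + c * m'); auto; field_simplify; auto; lra.
Qed.

Lemma choose_w x1 x2 x3 x4 : cfg x1 x2 x3 x4 -> exists w,
  ~ inspan w x1 x3 /\ ~ inspan w x1 x4 /\ ~ inspan w x2 x3 /\ ~ inspan w x2 x4.
Proof.
  intros (H1 & H2 & H3 & H4 & D12 & D13 & D14 & D23 & D24 & D34).
  destruct (bad_fin x1 x3 H1 H3 D13) as [r1 [r2 R12]].
  destruct (bad_fin x1 x4 H1 H4 D14) as [r3 [r4 R34]].
  destruct (bad_fin x2 x3 H2 H3 D23) as [r5 [r6 R56]].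
  destruct (bad_fin x2 x4 H2 H4 D24) as [r7 [r8 R78]].
  set (k := 1 + Rabs r1 + Rabs r2 + Rabs r3 + Rabs r4 + Rabs r5 + Rabs r6 + Rabs r7 + Rabs r8).
  assert (Ha := Rabs_pos r1). assert (Hb := Rabs_pos r2). assert (Hc := Rabs_pos r3). assert (Hd := Rabs_pos r4).
  assert (He := Rabs_pos r5). assert (Hf := Rabs_pos r6). assert (Hg := Rabs_pos r7). assert (Hh := Rabs_pos r8).
  assert (A1 := Rle_abs r1). assert (A2 := Rle_abs r2). assert (A3 := Rle_abs r3). assert (A4 := Rle_abs r4).
  assert (A5 := Rle_abs r5). assert (A6 := Rle_abs r6). assert (A7 := Rle_abs r7). assert (A8 := Rle_abs r8).
  exists (vk k). repeat split; intro I.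
  - destruct (R12 k I); unfold k in *; lra.
  - destruct (R34 k I); unfold k in *; lra.
  - destruct (R56 k I); unfold k in *; lra.
  - destruct (R78 k I); unfold k in *; lra.
Qed.

Lemma arc_0 p q : on_S2 p -> arc p q 0 = p.
Proof. intros H. unfold arc. replace (comb (1 - 0) 0 p q) with p by (unfold comb; dpt; f_equal; [f_equal|]; ring). apply nrm_unit; auto. Qed.
Lemma arc_1 p q : on_S2 q -> arc p q 1 = q.
Proof. intros H. unfold arc. replace (comb (1 - 1) 1 p q) with q by (unfold comb; dpt; f_equal; [f_equal|]; ring). apply nrm_unit; auto. Qed.
Lemma arc_join p w q : arc p w 1 = arc w q 0.
Proof. unfold arc. f_equal. unfold comb; dpt; f_equal; [f_equal|]; ring. Qed.

Lemma disjoint_paths x1 x2 x3 x4 : cfg x1 x2 x3 x4 -> exists al be, adm_alpha x1 x2 x3 x4 al /\ adm_beta x1 x2 x3 x4 be /\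
  forall s t, unit_int s -> unit_int t -> be s <> al t.
Proof.
  intros Hc. destruct (choose_w _ _ _ _ Hc) as [w [N13 [N14 [N23 N24]]]].
  assert (Hc' := Hc). destruct Hc' as (H1 & H2 & H3 & H4 & D12 & D13 & D14 & D23 & D24 & D34).
  set (w' := vscale (-1) w).
  assert (N31' : ~ inspan w' x3 x1) by (intro I; apply N13, inspan_swap, neg_inspan; auto).
  assert (N41' : ~ inspan w' x4 x1) by (intro I; apply N14, inspan_swap, neg_inspan; auto).
  assert (NZ : forall t, 0 <= t <= 1 -> (1 - t) <> 0 \/ t <> 0) by (intros t Ht; destruct (Req_dec t 0); [left|right]; lra).
  assert (NZ' : forall t, 0 <= t <= 1 -> t <> 0 \/ (1 - t) <> 0) by (intros t Ht; destruct (Req_dec t 0); [right|left]; lra).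
  assert (Z1 : forall t, 0 <= t <= 1 -> comb (1 - t) t x1 w <> (0, 0, 0)) by (intros; apply (lin_nz w x3); auto).
  assert (Z2 : forall t, 0 <= t <= 1 -> comb (1 - t) t w x2 <> (0, 0, 0)) by (intros; rewrite comb_swap; apply (lin_nz w x3); auto).
  assert (Z3 : forall t, 0 <= t <= 1 -> comb (1 - t) t x3 w' <> (0, 0, 0)) by (intros; apply (lin_nz w' x1); auto).
  assert (Z4 : forall t, 0 <= t <= 1 -> comb (1 - t) t w' x4 <> (0, 0, 0)) by (intros; rewrite comb_swap; apply (lin_nz w' x1); auto).
  assert (Pw : on_S2 (nrm w)).
  { apply nrm_S2. specialize (Z1 1 ltac:(lra)). intro E; apply Z1. rewrite <- E. unfold comb; dpt; f_equal; [f_equal|]; ring. }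
  assert (Pw' : on_S2 (nrm w')).
  { apply nrm_S2. specialize (Z3 1 ltac:(lra)). intro E; apply Z3. rewrite <- E. unfold comb; dpt; f_equal; [f_equal|]; ring. }
  assert (PA1 : is_path (arc x1 w)) by (apply arc_path; auto).
  assert (PA2 : is_path (arc w x2)) by (apply arc_path; auto).
  assert (PB1 : is_path (arc x3 w')) by (apply arc_path; auto).
  assert (PB2 : is_path (arc w' x4)) by (apply arc_path; auto).
  set (al := concat (arc x1 w) (arc w x2)). set (be := concat (arc x3 w') (arc w' x4)).
  assert (Pal : is_path al) by (apply concat_path; auto; apply arc_join).
  assert (Pbe : is_path be) by (apply concat_path; auto; apply arc_join).
  assert (al0 : al 0 = x1) by (unfold al; rewrite concat_0, arc_0; auto).
  assert (al1 : al 1 = x2) by (unfold al; rewrite concat_1, arc_1; auto).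
  assert (be0 : be 0 = x3) by (unfold be; rewrite concat_0, arc_0; auto).
  assert (be1 : be 1 = x4) by (unfold be; rewrite concat_1, arc_1; auto).
  assert (VN : forall A, A <> (0, 0, 0) -> vnorm A > 0) by (intros A HA; apply sqrt_lt_R0; apply dot_pos; auto).
  assert (D : forall s t, unit_int s -> unit_int t -> be s <> al t).
  { intros s t Hs Ht E. unfold unit_int in *. unfold be, al, concat, arc in E.
    destruct (Rle_dec s (1/2)); destruct (Rle_dec t (1/2)); symmetry in E; apply nrm_eq in E;
      try (apply Z1; lra); try (apply Z2; lra); try (apply Z3; lra); try (apply Z4; lra).
    - revert E. apply (cone_disj x1 x3 w); auto; try lra.
      apply Rdiv_lt_0_compat; apply VN; [apply Z1|apply Z3]; lra.
    - rewrite (comb_swap _ _ w x2) in E. revert E. apply (cone_disj x2 x3 w); auto; try lra.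
      apply Rdiv_lt_0_compat; apply VN; [rewrite comb_swap; apply Z2|apply Z3]; lra.
    - rewrite (comb_swap _ _ w' x4) in E. revert E. apply (cone_disj x1 x4 w); auto; try lra.
      apply Rdiv_lt_0_compat; apply VN; [apply Z1|rewrite comb_swap; apply Z4]; lra.
    - rewrite (comb_swap _ _ w x2), (comb_swap _ _ w' x4) in E. revert E. apply (cone_disj x2 x4 w); auto; try lra.
      apply Rdiv_lt_0_compat; apply VN; [rewrite comb_swap; apply Z2|rewrite comb_swap; apply Z4]; lra. }
  exists al, be. split; [|split]; auto.
  - split; auto. split; auto. split; auto. split; intros t Ht E.
    + apply (D 0 t); [unfold unit_int; lra|auto|congruence].
    + apply (D 1 t); [unfold unit_int; lra|auto|congruence].
  - split; auto. split; auto. split; auto. split; intros t Ht E.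
    + apply (D t 0); [auto|unfold unit_int; lra|congruence].
    + apply (D t 1); [auto|unfold unit_int; lra|congruence].
Qed.


Lemma int_exists x1 x2 x3 x4 al be g : cfg x1 x2 x3 x4 -> adm_alpha x1 x2 x3 x4 al -> adm_beta x1 x2 x3 x4 be ->
  (forall s t, unit_int s -> unit_int t -> be s <> al t) ->
  is_path g -> g 0 = x3 -> g 1 = x4 -> avoid12 x1 x2 g -> exists k, int_number x1 x2 x3 x4 al g k.
Proof.
  intros Hc Ha Hb Hd Pg G0 G1 Ag.
  assert (Av := adm_beta_avoid _ _ _ _ _ Hb).
  destruct Hb as [Pb [Eb0 [Eb1 _]]].
  set (L := concat (rev be) g).
  assert (Hj : rev be 1 = g 0) by (unfold rev; replace (1 - 1) with 0 by ring; congruence).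
  assert (PL : is_path L) by (apply concat_path; auto; apply rev_path; auto).
  assert (AL : avoid12 x1 x2 L) by (apply avoid_concat; auto; apply avoid_rev; auto).
  assert (L0 : L 0 = x4) by (unfold L; rewrite concat_0; unfold rev; replace (1 - 0) with 1 by ring; auto).
  assert (L1 : L 1 = x4) by (unfold L; rewrite concat_1; auto).
  destruct (W_exists _ _ _ _ L Hc PL AL) as [v WL].
  destruct (goodW _ _ _ _ L Hc PL AL) as [GL _].
  destruct (wn_loop _ _ _ _ _ GL ltac:(congruence) WL) as [k Hk]. rewrite Hk in WL.
  exists k, (rev be). split; [apply rev_path; auto|]. split.
  { unfold rev. replace (1 - 0) with 1 by ring. auto. }
  split. { unfold rev. replace (1 - 1) with 0 by ring. auto. }
  split. { intros s t Hs Ht. unfold rev. apply Hd; auto. unfold unit_int in *; lra. }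
  apply (wind_iff x1 x2 x3 x4); auto.
Qed.

Lemma Rcal_exists F x1 x2 x3 x4 : cfg x1 x2 x3 x4 -> homeo_S2 F ->
  F x1 = x1 -> F x2 = x2 -> F x3 = x3 -> F x4 = x4 -> exists r, Rcal F x1 x2 x3 x4 r.
Proof.
  intros Hc HF F1 F2 F3 F4.
  destruct (disjoint_paths _ _ _ _ Hc) as [al [be [Ha [Hb Hd]]]].
  assert (Av := adm_beta_avoid _ _ _ _ _ Hb).
  assert (Hb' := Hb). destruct Hb' as [Pb [Eb0 [Eb1 _]]].
  destruct (int_exists x1 x2 x3 x4 al be (fun t => F (be t))) as [k1 I1]; auto.
  { apply comp_path; auto. }
  { rewrite Eb0; auto. }
  { rewrite Eb1; auto. }
  { apply avoid_comp; auto; apply Hc. }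
  destruct (int_exists x1 x2 x3 x4 al be be) as [k2 I2]; auto.
  exists (k1 - k2)%Z, al, be. split; auto. split; auto. exists k1, k2. auto.
Qed.

Theorem proposition4 (f g : pt -> pt) (x1 x2 x3 x4 : pt) :
  homeo_S2 f -> orient_pres f -> homeo_S2 g -> orient_pres g ->
  on_S2 x1 -> on_S2 x2 -> on_S2 x3 -> on_S2 x4 ->
  x1 <> x2 -> x1 <> x3 -> x1 <> x4 -> x2 <> x3 -> x2 <> x4 -> x3 <> x4 ->
  f x1 = x1 -> f x2 = x2 -> f x3 = x3 -> f x4 = x4 ->
  g x1 = x1 -> g x2 = x2 -> g x3 = x3 -> g x4 = x4 ->
  (exists r : Z, Rcal (fun x => f (g x)) x1 x2 x3 x4 r) /\
  (exists r : Z, Rcal f x1 x2 x3 x4 r) /\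
  (exists r : Z, Rcal g x1 x2 x3 x4 r) /\
  forall r r1 r2 : Z,
    Rcal (fun x => f (g x)) x1 x2 x3 x4 r ->
    Rcal f x1 x2 x3 x4 r1 -> Rcal g x1 x2 x3 x4 r2 ->
    r = (r1 + r2)%Z.
Proof.
  intros Hf Of Hg Og H1 H2 H3 H4 D12 D13 D14 D23 D24 D34 f1 f2 f3 f4 g1 g2 g3 g4.
  assert (Hc : cfg x1 x2 x3 x4) by (repeat split; auto).
  assert (Hfg : homeo_S2 (fun x => f (g x))) by (apply comp_homeo; auto).
  split; [apply Rcal_exists; auto; congruence|].
  split; [apply Rcal_exists; auto|].
  split; [apply Rcal_exists; auto|].
  intros r r1 r2 R0 R1 R2.
  destruct (Rcal_decomp _ _ _ _ _ r Hc Hfg ltac:(congruence) ltac:(congruence) ltac:(congruence) ltac:(congruence) R0)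
    as [b0 [Hb0 [vfg [v0 [Wfg [W0 E0]]]]]].
  destruct (Rcal_decomp _ _ _ _ _ r1 Hc Hf f1 f2 f3 f4 R1) as [b1 [Hb1 [vf1 [v1 [Wf1 [W1 E1]]]]]].
  destruct (Rcal_decomp _ _ _ _ _ r2 Hc Hg g1 g2 g3 g4 R2) as [b2 [Hb2 [vg2 [v2 [Wg2 [W2 E2]]]]]].
  assert (Hgb : adm_beta x1 x2 x3 x4 (fun t => g (b0 t))).
  { assert (Av := adm_beta_avoid _ _ _ _ _ Hb0). destruct Hb0 as [P [B0 [B1 _]]].
    split; [apply comp_path; auto|]. split; [rewrite B0; auto|]. split; [rewrite B1; auto|].
    assert (A := avoid_comp g x1 x2 b0 Hg H1 H2 g1 g2 P Av).
    split; intros t Ht; apply A; auto. }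
  destruct (W_exists x1 x2 x3 x4 (fun t => g (b0 t)) Hc ltac:(apply Hgb) (adm_beta_avoid _ _ _ _ _ Hgb)) as [w Ww].
  assert (I1 : vf1 - v1 = vfg - w).
  { apply (beta_indep f x1 x2 x3 x4 b1 (fun t => g (b0 t))); auto. }
  assert (I2 : vg2 - v2 = w - v0).
  { apply (beta_indep g x1 x2 x3 x4 b2 b0); auto. }
  assert (PI > 0) by apply PI_RGT_0.
  assert (IZR r = IZR (r1 + r2)).
  { rewrite plus_IZR. apply Rmult_eq_reg_l with (2 * PI); [|lra]. rewrite Rmult_plus_distr_l. lra. }
  apply eq_IZR; auto.
Qed.
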